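(* There exists a Moufang loop $M$ of order $3^{19}$ and elements $c,d\in M$ such that the set $l_{c,d}=\{x\in M \mid (x,c,d)=1\}$ is not a subloop of $M$. More precisely, there are $a,b\in l_{c,d}$ with $[a,b]\notin l_{c,d}$ (where $M$ is generated by $a,b,c,d$).
   Context: A Moufang loop is a loop satisfying the identity $(xy)(zx)=(x(yz))x$. For elements $x,y,z$ of a Moufang loop, $[x,y]$ denotes the unique element $c$ with $xy=(yx)c$, and $(x,y,z)$ denotes the unique element $u$ with $(xy)z=(x(yz))u$. *)

(* Defs.v *)
From mathcomp Require Import all_boot.
Set Implicit Arguments. Unset Strict Implicit. Unset Printing Implicit Defensive.

Section Loops.
Variables (T : finType) (mul : T -> T -> T) (one : T).

Definition is_loop : Prop :=
  (forall x, mul one x = x /\ mul x one = x) /\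
  (forall a b, exists! x, mul a x = b) /\
  (forall a b, exists! y, mul y a = b).

Definition is_moufang_loop : Prop :=
  is_loop /\ forall x y z, mul (mul x y) (mul z x) = mul (mul x (mul y z)) x.

Definition lcomm (x y : T) : T :=
  odflt one [pick c | mul x y == mul (mul y x) c].

Definition lassoc (x y z : T) : T :=
  odflt one [pick u | mul (mul x y) z == mul (mul x (mul y z)) u].

Definition is_subloop (S : {set T}) : Prop :=
  one \in S /\
  (forall x y, x \in S -> y \in S -> mul x y \in S) /\
  (forall x y z, x \in S -> y \in S -> mul x z = y -> z \in S) /\
  (forall x y z, x \in S -> y \in S -> mul z x = y -> z \in S).

Definition generates (A : {set T}) : Prop :=
  forall S : {set T}, is_subloop S -> A \subset S -> S = [set: T].

Definition lset (c d : T) : {set T} := [set x | lassoc x c d == one].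

End Loops.

(* Main.v *)
Require Import Defs.
From Stdlib Require Import ZArith Lia.
From mathcomp Require Import all_boot.

Set Implicit Arguments. Unset Strict Implicit. Unset Printing Implicit Defensive.

Module MLoop.
Local Open Scope Z_scope.

Record oct := Oct { o0 : Z; o1 : Z; o2 : Z; o3 : Z; o4 : Z; o5 : Z; o6 : Z; o7 : Z }.
Definition omul (x y : oct) : oct :=
  let (a, u1, u2, u3, v1, v2, v3, b) := x in
  let (c, w1, w2, w3, z1, z2, z3, d) := y in
  Oct (a*c + (u1*z1 + u2*z2 + u3*z3))
      (a*w1 + d*u1 - (v2*z3 - v3*z2))
      (a*w2 + d*u2 - (v3*z1 - v1*z3))
      (a*w3 + d*u3 - (v1*z2 - v2*z1))
      (c*v1 + b*z1 + (u2*w3 - u3*w2))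
      (c*v2 + b*z2 + (u3*w1 - u1*w3))
      (c*v3 + b*z3 + (u1*w2 - u2*w1))
      (b*d + (v1*w1 + v2*w2 + v3*w3)).

Lemma omul_moufang x y z : omul (omul x y) (omul z x) = omul (omul x (omul y z)) x.
Proof.
destruct x, y, z; cbn; f_equal; ring.
Qed.
Record v8 := V8 { c0 : Z; c1 : Z; c2 : Z; c3 : Z; c4 : Z; c5 : Z; c6 : Z; c7 : Z }.

Definition am (u v : v8) : v8 :=
  let (u0,u1,u2,u3,u4,u5,u6,u7) := u in let (v0,v1,v2,v3,v4,v5,v6,v7) := v in
  V8 ((6)*u0*v0 + (-3)*u0*v1 + (-3)*u0*v3 + (-18)*u0*v4 + (-18)*u1*v5 + (-729)*u1*v6 + (-486)*u1*v7 + (-3)*u2*v0 + (-18)*u2*v5 + (243)*u2*v6 + (-18)*u3*v5 + (-729)*u4*v6 + (18)*u5*v1 + (18)*u5*v2 + (18)*u5*v3 + (729)*u5*v6 + (243)*u6*v0 + (729)*u6*v1 + (-243)*u6*v2 + (729)*u6*v4 + (-729)*u6*v5 + (486)*u7*v1) ((3)*u0*v1 + (3)*u1*v0 + (-3)*u1*v1 + (-3)*u1*v3 + (-18)*u1*v4 + (-9)*u1*v5 + (-3)*u2*v1 + (9)*u2*v5 + (-27)*u4*v5 + (9)*u5*v1 + (-9)*u5*v2 + (27)*u5*v4 + (243)*u6*v1) ((3)*u0*v0 + (-3)*u0*v3 + (-9)*u0*v4 + (-243)*u0*v6 + (-243)*u0*v7 + (-6)*u1*v1 + (-6)*u1*v2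 + (-6)*u1*v3 + (-36)*u1*v5 + (-2673)*u1*v6 + (-1458)*u1*v7 + (-3)*u2*v2 + (486)*u2*v6 + (-18)*u3*v5 + (-243)*u3*v6 + (-54)*u4*v5 + (-2187)*u4*v6 + (18)*u5*v1 + (18)*u5*v2 + (18)*u5*v3 + (2187)*u5*v6 + (1458)*u5*v7 + (486)*u6*v0 + (2430)*u6*v1 + (-486)*u6*v2 + (1458)*u6*v4 + (-1458)*u6*v5 + (243)*u7*v0 + (1701)*u7*v1 + (-243)*u7*v2 + (729)*u7*v4 + (-729)*u7*v5) ((-3)*u0*v0 + (-3)*u0*v1 + (6)*u0*v2 + (6)*u0*v3 + (486)*u0*v6 + (486)*u0*v7 + (3)*u1*v0 + (6)*u1*v1 + (6)*u1*v3 + (18)*u1*v4 + (45)*u1*v5 + (3888)*u1*v6 + (2187)*u1*v7 + (3)*u2*v1 + (-9)*u2*v5 + (-486)*u2*v6 + (-243)*u2*v7 + (3)*u3*v0 + (-3)*u3*v1 + (-6)*u3*v2 + (-3)*u3*v3 + (18)*u3*v5 + (486)*u3*v6 + (9)*u4*v0 + (-18)*u4*v1 + (-18)*u4*v2 + (-18)*u4*v3 + (81)*u4*v5 + (2916)*u4*v6 + (729)*u4*v7 + (-27)*u5*v1 + (-9)*u5*v2 + (-18)*u5*v3 + (-27)*u5*v4 + (-2916)*u5*v6 + (-2187)*u5*v7 + (-729)*u6*v0 + (-3645)*u6*v1 + (729)*u6*v2 + (-2187)*u6*v4 + (2187)*u6*v5 + (-486)*u7*v0 + (-2430)*u7*v1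 + (486)*u7*v2 + (-1458)*u7*v4 + (1458)*u7*v5) (u0*v0 + (-1)*u0*v2 + (-1)*u0*v3 + (-81)*u0*v6 + (-81)*u0*v7 + (-2)*u1*v1 + (-1)*u1*v3 + (-3)*u1*v4 + (-9)*u1*v5 + (-729)*u1*v6 + (-405)*u1*v7 + (-1)*u2*v0 + (-1)*u2*v1 + (-3)*u2*v5 + (81)*u2*v6 + (-1)*u3*v1 + u3*v2 + (-3)*u3*v4 + (-6)*u3*v5 + (-81)*u3*v6 + (3)*u4*v0 + (3)*u4*v2 + (-18)*u4*v4 + (-9)*u4*v5 + (-486)*u4*v6 + (3)*u5*v1 + (9)*u5*v2 + (6)*u5*v3 + (-9)*u5*v4 + (729)*u5*v6 + (486)*u5*v7 + (162)*u6*v0 + (648)*u6*v1 + (-162)*u6*v2 + (486)*u6*v4 + (-486)*u6*v5 + (81)*u7*v0 + (486)*u7*v1 + (-81)*u7*v2 + (243)*u7*v4 + (-243)*u7*v5) (u0*v1 + (3)*u0*v5 + (-1)*u1*v0 + (-3)*u1*v5 + (-81)*u1*v6 + (-81)*u1*v7 + (-3)*u3*v5 + (-18)*u4*v5 + (3)*u5*v0 + (-3)*u5*v2 + (243)*u5*v6 + (81)*u6*v1 + (81)*u7*v1) ((-3)*u0*v7 + (-21)*u1*v6 + (-12)*u1*v7 + (-3)*u3*v6 + (-18)*u4*v6 + (18)*u5*v6 + (18)*u5*v7 + (6)*u6*v0 + (18)*u6*v1 + (-3)*u6*v2 + (-18)*u6*v5 + (243)*u6*v6 + (3)*u7*v0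 + (12)*u7*v1 + (-18)*u7*v5) ((3)*u0*v6 + (6)*u0*v7 + (30)*u1*v6 + (18)*u1*v7 + (-6)*u2*v6 + (-3)*u2*v7 + (3)*u3*v6 + (27)*u4*v6 + (-18)*u5*v6 + (-18)*u5*v7 + (-3)*u6*v0 + (-30)*u6*v1 + (6)*u6*v2 + (-3)*u6*v3 + (-27)*u6*v4 + (18)*u6*v5 + (243)*u6*v7 + (-21)*u7*v1 + (-3)*u7*v3 + (-18)*u7*v4 + (18)*u7*v5).

Definition addv (u v : v8) : v8 :=
  let (u0,u1,u2,u3,u4,u5,u6,u7) := u in let (v0,v1,v2,v3,v4,v5,v6,v7) := v in
  V8 (u0+v0) (u1+v1) (u2+v2) (u3+v3) (u4+v4) (u5+v5) (u6+v6) (u7+v7).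

Definition subv (u v : v8) : v8 :=
  let (u0,u1,u2,u3,u4,u5,u6,u7) := u in let (v0,v1,v2,v3,v4,v5,v6,v7) := v in
  V8 (u0-v0) (u1-v1) (u2-v2) (u3-v3) (u4-v4) (u5-v5) (u6-v6) (u7-v7).

Definition lmZ (u v : v8) : v8 := addv (addv u v) (am u v).

Definition Phi (u : v8) : oct :=
  let (u0,u1,u2,u3,u4,u5,u6,u7) := u in
  Oct ((1) + (3)*u0 + (-9)*u4 + (-9)*u5 + (243)*u6) ((-3)*u0 + (3)*u2 + (-9)*u4 + (9)*u5) ((3)*u0 + (-3)*u1 + (-3)*u3 + (-9)*u4 + (243)*u7) ((-3)*u1) ((3)*u1 + (-9)*u5) ((-3)*u1 + (3)*u2 + (-9)*u4 + (-9)*u5) ((-3)*u0 + (-3)*u1 + (-3)*u2 + (-3)*u3 + (-9)*u5) ((1) + (3)*u0 + (-3)*u1 + (-3)*u2 + (-3)*u3 + (-9)*u4 + (9)*u5).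

Lemma Phi_lm u v : Phi (lmZ u v) = omul (Phi u) (Phi v).
Proof. destruct u, v; cbv beta iota delta [Phi lmZ addv am omul]; f_equal; ring. Qed.

Lemma Phi_inj u v : Phi u = Phi v -> u = v.
Proof.
  destruct u as [u0 u1 u2 u3 u4 u5 u6 u7], v as [v0 v1 v2 v3 v4 v5 v6 v7]; cbv beta iota delta [Phi]; intros H;
  pose proof (f_equal o0 H) as H0; pose proof (f_equal o1 H) as H1; pose proof (f_equal o2 H) as H2; pose proof (f_equal o3 H) as H3;
  pose proof (f_equal o4 H) as H4; pose proof (f_equal o5 H) as H5; pose proof (f_equal o6 H) as H6; pose proof (f_equal o7 H) as H7;
  cbv beta iota delta [o0 o1 o2 o3 o4 o5 o6 o7] in H0, H1, H2, H3, H4, H5, H6, H7; clear H.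
  assert (E0 : 243 * (u0 - v0) = (-81)*(((-3)*u0 + (3)*u2 + (-9)*u4 + (9)*u5) - ((-3)*v0 + (3)*v2 + (-9)*v4 + (9)*v5)) + (-243)*(((-3)*u1) - ((-3)*v1)) + (-162)*(((3)*u1 + (-9)*u5) - ((3)*v1 + (-9)*v5)) + (81)*(((-3)*u1 + (3)*u2 + (-9)*u4 + (-9)*u5) - ((-3)*v1 + (3)*v2 + (-9)*v4 + (-9)*v5))) by ring.
  assert (E1 : 243 * (u1 - v1) = (-81)*(((-3)*u1) - ((-3)*v1))) by ring.
  assert (E2 : 243 * (u2 - v2) = (-162)*(((-3)*u0 + (3)*u2 + (-9)*u4 + (9)*u5) - ((-3)*v0 + (3)*v2 + (-9)*v4 + (9)*v5)) + (-810)*(((-3)*u1) - ((-3)*v1)) + (-567)*(((3)*u1 + (-9)*u5) - ((3)*v1 + (-9)*v5)) + (243)*(((-3)*u1 + (3)*u2 + (-9)*u4 + (-9)*u5) - ((-3)*v1 + (3)*v2 + (-9)*v4 + (-9)*v5)) + (81)*(((-3)*u0 + (-3)*u1 + (-3)*u2 + (-3)*u3 + (-9)*u5) - ((-3)*v0 + (-3)*v1 + (-3)*v2 + (-3)*v3 + (-9)*v5)) + (-81)*(((3)*u0 + (-3)*u1 + (-3)*u2 + (-3)*u3 + (-9)*u4 + (9)*u5) - ((3)*v0 + (-3)*v1 + (-3)*v2 + (-3)*v3 + (-9)*v4 + (9)*v5))) by ring.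
  assert (E3 : 243 * (u3 - v3) = (243)*(((-3)*u0 + (3)*u2 + (-9)*u4 + (9)*u5) - ((-3)*v0 + (3)*v2 + (-9)*v4 + (9)*v5)) + (1215)*(((-3)*u1) - ((-3)*v1)) + (810)*(((3)*u1 + (-9)*u5) - ((3)*v1 + (-9)*v5)) + (-324)*(((-3)*u1 + (3)*u2 + (-9)*u4 + (-9)*u5) - ((-3)*v1 + (3)*v2 + (-9)*v4 + (-9)*v5)) + (-162)*(((-3)*u0 + (-3)*u1 + (-3)*u2 + (-3)*u3 + (-9)*u5) - ((-3)*v0 + (-3)*v1 + (-3)*v2 + (-3)*v3 + (-9)*v5)) + (81)*(((3)*u0 + (-3)*u1 + (-3)*u2 + (-3)*u3 + (-9)*u4 + (9)*u5) - ((3)*v0 + (-3)*v1 + (-3)*v2 + (-3)*v3 + (-9)*v4 + (9)*v5))) by ring.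
  assert (E4 : 243 * (u4 - v4) = (-54)*(((-3)*u0 + (3)*u2 + (-9)*u4 + (9)*u5) - ((-3)*v0 + (3)*v2 + (-9)*v4 + (9)*v5)) + (-216)*(((-3)*u1) - ((-3)*v1)) + (-162)*(((3)*u1 + (-9)*u5) - ((3)*v1 + (-9)*v5)) + (54)*(((-3)*u1 + (3)*u2 + (-9)*u4 + (-9)*u5) - ((-3)*v1 + (3)*v2 + (-9)*v4 + (-9)*v5)) + (27)*(((-3)*u0 + (-3)*u1 + (-3)*u2 + (-3)*u3 + (-9)*u5) - ((-3)*v0 + (-3)*v1 + (-3)*v2 + (-3)*v3 + (-9)*v5)) + (-27)*(((3)*u0 + (-3)*u1 + (-3)*u2 + (-3)*u3 + (-9)*u4 + (9)*u5) - ((3)*v0 + (-3)*v1 + (-3)*v2 + (-3)*v3 + (-9)*v4 + (9)*v5))) by ring.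
  assert (E5 : 243 * (u5 - v5) = (-27)*(((-3)*u1) - ((-3)*v1)) + (-27)*(((3)*u1 + (-9)*u5) - ((3)*v1 + (-9)*v5))) by ring.
  assert (E6 : 243 * (u6 - v6) = (1)*(((3)*u0 + (-9)*u4 + (-9)*u5 + (243)*u6) - ((3)*v0 + (-9)*v4 + (-9)*v5 + (243)*v6)) + (-1)*(((-3)*u0 + (3)*u2 + (-9)*u4 + (9)*u5) - ((-3)*v0 + (3)*v2 + (-9)*v4 + (9)*v5)) + (-6)*(((-3)*u1) - ((-3)*v1)) + (-5)*(((3)*u1 + (-9)*u5) - ((3)*v1 + (-9)*v5)) + (1)*(((-3)*u1 + (3)*u2 + (-9)*u4 + (-9)*u5) - ((-3)*v1 + (3)*v2 + (-9)*v4 + (-9)*v5)) + (1)*(((-3)*u0 + (-3)*u1 + (-3)*u2 + (-3)*u3 + (-9)*u5) - ((-3)*v0 + (-3)*v1 + (-3)*v2 + (-3)*v3 + (-9)*v5)) + (-1)*(((3)*u0 + (-3)*u1 + (-3)*u2 + (-3)*u3 + (-9)*u4 + (9)*u5) - ((3)*v0 + (-3)*v1 + (-3)*v2 + (-3)*v3 + (-9)*v4 + (9)*v5))) by ring.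
  assert (E7 : 243 * (u7 - v7) = (2)*(((-3)*u0 + (3)*u2 + (-9)*u4 + (9)*u5) - ((-3)*v0 + (3)*v2 + (-9)*v4 + (9)*v5)) + (1)*(((3)*u0 + (-3)*u1 + (-3)*u3 + (-9)*u4 + (243)*u7) - ((3)*v0 + (-3)*v1 + (-3)*v3 + (-9)*v4 + (243)*v7)) + (9)*(((-3)*u1) - ((-3)*v1)) + (6)*(((3)*u1 + (-9)*u5) - ((3)*v1 + (-9)*v5)) + (-3)*(((-3)*u1 + (3)*u2 + (-9)*u4 + (-9)*u5) - ((-3)*v1 + (3)*v2 + (-9)*v4 + (-9)*v5)) + (-1)*(((-3)*u0 + (-3)*u1 + (-3)*u2 + (-3)*u3 + (-9)*u5) - ((-3)*v0 + (-3)*v1 + (-3)*v2 + (-3)*v3 + (-9)*v5))) by ring.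
  f_equal; lia.
Qed.


Lemma lmZ_moufang x y z : lmZ (lmZ x y) (lmZ z x) = lmZ (lmZ x (lmZ y z)) x.
Proof. apply Phi_inj. rewrite !Phi_lm. apply omul_moufang. Qed.

Definition T := ('I_81 * 'I_81 * 'I_81 * 'I_27 * 'I_9 * 'I_9)%type.

Definition ofZ (n : nat) (z : Z) : 'I_n.+1 := Ordinal (ltn_pmod (Z.to_nat (z mod Z.of_nat n.+1)) (ltn0Sn n)).

Definition toV (x : T) : v8 :=
  let '(x0, x1, x2, x3, x4, x5) := x in
  V8 (Z.of_nat x0) (Z.of_nat x1) (Z.of_nat x2) (Z.of_nat x3) (Z.of_nat x4) (Z.of_nat x5) 0 0.

Definition ofV (u : v8) : T :=
  let (u0, u1, u2, u3, u4, u5, _, _) := u in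
  (ofZ 80 u0, ofZ 80 u1, ofZ 80 u2, ofZ 26 u3, ofZ 8 u4, ofZ 8 u5).

Definition mul (x y : T) : T := ofV (lmZ (toV x) (toV y)).
Definition zero8 := V8 0 0 0 0 0 0 0 0.
Definition one : T := ofV zero8.

Definition congK (u v : v8) : Prop :=
  c0 u mod 81 = c0 v mod 81 /\ c1 u mod 81 = c1 v mod 81 /\ c2 u mod 81 = c2 v mod 81 /\
  c3 u mod 27 = c3 v mod 27 /\ c4 u mod 9 = c4 v mod 9 /\ c5 u mod 9 = c5 v mod 9.

Lemma cong_shift (a b K : Z) : 0 < K -> a mod K = b mod K -> exists q, b = a + K * q.
Proof.
  intros HK H. pose proof (Z.div_mod a K ltac:(lia)). pose proof (Z.div_mod b K ltac:(lia)).
  exists (b / K - a / K). lia.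
Qed.

Lemma mod_shift (a b K e : Z) : b = a + e * K -> a mod K = b mod K.
Proof.
  intros ->. destruct (Z.eq_dec K 0) as [->|HK]; first by rewrite Z.mul_0_r Z.add_0_r.
  by rewrite Z.mod_add.
Qed.

Lemma ofZ_val n z : Z.of_nat (ofZ n z) = z mod Z.of_nat n.+1.
Proof.
  have H := Z.mod_pos_bound z (Z.of_nat n.+1) ltac:(lia).
  rewrite /ofZ /= modn_small; first by rewrite Z2Nat.id; lia.
  apply/ltP; lia.
Qed.

Lemma ofZ_nat n (i : 'I_n.+1) : ofZ n (Z.of_nat i) = i.
Proof.
  apply: val_inj. have Hi := ltn_ord i. move/ltP: Hi => Hi.
  rewrite /ofZ /= Z.mod_small; last lia.
  by rewrite Nat2Z.id modn_small.
Qed.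

Lemma ofZ_eq n z w : z mod Z.of_nat n.+1 = w mod Z.of_nat n.+1 -> ofZ n z = ofZ n w.
Proof. by rewrite /ofZ => ->. Qed.

Lemma ofZ_inv n z w : ofZ n z = ofZ n w -> z mod Z.of_nat n.+1 = w mod Z.of_nat n.+1.
Proof. move=> H. rewrite -!ofZ_val. by rewrite H. Qed.

Lemma ofV_eq u v : congK u v -> ofV u = ofV v.
Proof.
  destruct u, v; rewrite /congK /=; move=> [H0 [H1 [H2 [H3 [H4 H5]]]]].
  by rewrite (@ofZ_eq 80 _ _ H0) (@ofZ_eq 80 _ _ H1) (@ofZ_eq 80 _ _ H2) (@ofZ_eq 26 _ _ H3) (@ofZ_eq 8 _ _ H4) (@ofZ_eq 8 _ _ H5).
Qed.

Lemma ofV_inv u v : ofV u = ofV v -> congK u v.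
Proof.
  destruct u, v; move=> H.
  have E0 := f_equal (fun t : T => Z.of_nat t.1.1.1.1.1) H.
  have E1 := f_equal (fun t : T => Z.of_nat t.1.1.1.1.2) H.
  have E2 := f_equal (fun t : T => Z.of_nat t.1.1.1.2) H.
  have E3 := f_equal (fun t : T => Z.of_nat t.1.1.2) H.
  have E4 := f_equal (fun t : T => Z.of_nat t.1.2) H.
  have E5 := f_equal (fun t : T => Z.of_nat t.2) H.
  cbn [fst snd ofV] in E0, E1, E2, E3, E4, E5.
  rewrite !ofZ_val in E0, E1, E2, E3, E4, E5.
  rewrite /congK /=. by do !split.
Qed.

Lemma ofV_toV x : ofV (toV x) = x.
Proof.
  case: x => [[[[[x0 x1] x2] x3] x4] x5] /=. by rewrite !ofZ_nat.
Qed.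

Lemma toV_ofV u : congK (toV (ofV u)) u.
Proof.
  apply: ofV_inv. by rewrite ofV_toV.
Qed.

Lemma congK_refl u : congK u u.
Proof. by rewrite /congK; do !split. Qed.
Lemma congK_sym u v : congK u v -> congK v u.
Proof. rewrite /congK; intuition. Qed.
Lemma congK_trans u v w : congK u v -> congK v w -> congK u w.
Proof. rewrite /congK; intuition congruence. Qed.
Lemma lmZ_cong u u' v v' : congK u u' -> congK v v' -> congK (lmZ u v) (lmZ u' v').
Proof.
  destruct u as [u0 u1 u2 u3 u4 u5 u6 u7], u' as [x0 x1 x2 x3 x4 x5 x6 x7], v as [v0 v1 v2 v3 v4 v5 v6 v7], v' as [y0 y1 y2 y3 y4 y5 y6 y7].
  unfold congK; cbv beta iota delta [c0 c1 c2 c3 c4 c5 c6 c7].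
  intros [A0 [A1 [A2 [A3 [A4 A5]]]]] [B0 [B1 [B2 [B3 [B4 B5]]]]].
  destruct (cong_shift (ltac:(lia) : 0 < 81) A0) as [s0 ->].
  destruct (cong_shift (ltac:(lia) : 0 < 81) B0) as [t0 ->].
  destruct (cong_shift (ltac:(lia) : 0 < 81) A1) as [s1 ->].
  destruct (cong_shift (ltac:(lia) : 0 < 81) B1) as [t1 ->].
  destruct (cong_shift (ltac:(lia) : 0 < 81) A2) as [s2 ->].
  destruct (cong_shift (ltac:(lia) : 0 < 81) B2) as [t2 ->].
  destruct (cong_shift (ltac:(lia) : 0 < 27) A3) as [s3 ->].
  destruct (cong_shift (ltac:(lia) : 0 < 27) B3) as [t3 ->].
  destruct (cong_shift (ltac:(lia) : 0 < 9) A4) as [s4 ->].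
  destruct (cong_shift (ltac:(lia) : 0 < 9) B4) as [t4 ->].
  destruct (cong_shift (ltac:(lia) : 0 < 9) A5) as [s5 ->].
  destruct (cong_shift (ltac:(lia) : 0 < 9) B5) as [t5 ->].
  cbv beta iota delta [lmZ addv am c0 c1 c2 c3 c4 c5 c6 c7].
  split; [|split; [|split; [|split; [|split]]]].
  apply (@mod_shift _ _ 81 (s0 + (486)*s0*t0 + (-243)*s0*t1 + (-81)*s0*t3 + (-162)*s0*t4 + (6)*s0*v0 + (-3)*s0*v1 + (-3)*s0*v3 + (-18)*s0*v4 + (-162)*s1*t5 + (-18)*s1*v5 + (-729)*s1*y6 + (-486)*s1*y7 + (-243)*s2*t0 + (-162)*s2*t5 + (-3)*s2*v0 + (-18)*s2*v5 + (243)*s2*y6 + (-54)*s3*t5 + (-6)*s3*v5 + (-81)*s4*y6 + (162)*s5*t1 + (162)*s5*t2 + (54)*s5*t3 + (2)*s5*v1 + (2)*s5*v2 + (2)*s5*v3 + (81)*s5*y6 + t0 + (6)*t0*u0 + (-3)*t0*u2 + (243)*t0*x6 + (-3)*t1*u0 + (18)*t1*u5 + (729)*t1*x6 + (486)*t1*x7 + (18)*t2*u5 + (-243)*t2*x6 + (-1)*t3*u0 + (6)*t3*u5 + (-2)*t4*u0 + (81)*t4*x6 + (-2)*t5*u1 + (-2)*t5*u2 + (-2)*t5*u3 + (-81)*t5*x6 + (9)*u1*v6 + (6)*u1*v7 + (-9)*u1*y6 + (-6)*u1*y7 + (-3)*u2*v6 + (3)*u2*y6 + (9)*u4*v6 +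 (-9)*u4*y6 + (-9)*u5*v6 + (9)*u5*y6 + (-3)*u6*v0 + (-9)*u6*v1 + (3)*u6*v2 + (-9)*u6*v4 + (9)*u6*v5 + (-6)*u7*v1 + (3)*v0*x6 + (9)*v1*x6 + (6)*v1*x7 + (-3)*v2*x6 + (9)*v4*x6 + (-9)*v5*x6)); ring.
  apply (@mod_shift _ _ 81 ((243)*s0*t1 + (3)*s0*v1 + s1 + (243)*s1*t0 + (-243)*s1*t1 + (-81)*s1*t3 + (-162)*s1*t4 + (-81)*s1*t5 + (3)*s1*v0 + (-3)*s1*v1 + (-3)*s1*v3 + (-18)*s1*v4 + (-9)*s1*v5 + (-243)*s2*t1 + (81)*s2*t5 + (-3)*s2*v1 + (9)*s2*v5 + (-27)*s4*t5 + (-3)*s4*v5 + (81)*s5*t1 + (-81)*s5*t2 + (27)*s5*t4 + s5*v1 + (-1)*s5*v2 + (3)*s5*v4 + (3)*t0*u1 + t1 + (3)*t1*u0 + (-3)*t1*u1 + (-3)*t1*u2 + (9)*t1*u5 + (243)*t1*x6 + (-9)*t2*u5 + (-1)*t3*u1 + (-2)*t4*u1 + (3)*t4*u5 + (-1)*t5*u1 + t5*u2 + (-3)*t5*u4 + (-3)*u6*v1 + (3)*v1*x6)); ring.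
  apply (@mod_shift _ _ 81 ((243)*s0*t0 + (-81)*s0*t3 + (-81)*s0*t4 + (3)*s0*v0 + (-3)*s0*v3 + (-9)*s0*v4 + (-243)*s0*y6 + (-243)*s0*y7 + (-486)*s1*t1 + (-486)*s1*t2 + (-162)*s1*t3 + (-324)*s1*t5 + (-6)*s1*v1 + (-6)*s1*v2 + (-6)*s1*v3 + (-36)*s1*v5 + (-2673)*s1*y6 + (-1458)*s1*y7 + s2 + (-243)*s2*t2 + (-3)*s2*v2 + (486)*s2*y6 + (-54)*s3*t5 + (-6)*s3*v5 + (-81)*s3*y6 + (-54)*s4*t5 + (-6)*s4*v5 + (-243)*s4*y6 + (162)*s5*t1 + (162)*s5*t2 + (54)*s5*t3 + (2)*s5*v1 + (2)*s5*v2 + (2)*s5*v3 + (243)*s5*y6 + (162)*s5*y7 + (3)*t0*u0 + (486)*t0*x6 + (243)*t0*x7 + (-6)*t1*u1 + (18)*t1*u5 + (2430)*t1*x6 + (1701)*t1*x7 + t2 + (-6)*t2*u1 + (-3)*t2*u2 + (18)*t2*u5 + (-486)*t2*x6 + (-243)*t2*x7 + (-1)*t3*u0 + (-2)*t3*u1 + (6)*t3*u5 + (-1)*t4*u0 + (162)*t4*x6 + (81)*t4*x7 + (-4)*t5*u1 + (-2)*t5*u3 + (-6)*t5*u4 + (-162)*t5*x6 + (-81)*t5*x7 + (3)*u0*v6 + (3)*u0*v7 + (-3)*u0*y6 + (-3)*u0*y7 + (33)*u1*v6 + (18)*u1*v7 + (-33)*u1*y6 + (-18)*u1*y7 + (-6)*u2*v6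 + (6)*u2*y6 + (3)*u3*v6 + (-3)*u3*y6 + (27)*u4*v6 + (-27)*u4*y6 + (-27)*u5*v6 + (-18)*u5*v7 + (27)*u5*y6 + (18)*u5*y7 + (-6)*u6*v0 + (-30)*u6*v1 + (6)*u6*v2 + (-18)*u6*v4 + (18)*u6*v5 + (-3)*u7*v0 + (-21)*u7*v1 + (3)*u7*v2 + (-9)*u7*v4 + (9)*u7*v5 + (6)*v0*x6 + (3)*v0*x7 + (30)*v1*x6 + (21)*v1*x7 + (-6)*v2*x6 + (-3)*v2*x7 + (18)*v4*x6 + (9)*v4*x7 + (-18)*v5*x6 + (-9)*v5*x7)); ring.
  apply (@mod_shift _ _ 27 ((-729)*s0*t0 + (-729)*s0*t1 + (1458)*s0*t2 + (486)*s0*t3 + (-9)*s0*v0 + (-9)*s0*v1 + (18)*s0*v2 + (18)*s0*v3 + (1458)*s0*y6 + (1458)*s0*y7 + (729)*s1*t0 + (1458)*s1*t1 + (486)*s1*t3 + (486)*s1*t4 + (1215)*s1*t5 + (9)*s1*v0 + (18)*s1*v1 + (18)*s1*v3 + (54)*s1*v4 + (135)*s1*v5 + (11664)*s1*y6 + (6561)*s1*y7 + (729)*s2*t1 + (-243)*s2*t5 + (9)*s2*v1 + (-27)*s2*v5 + (-1458)*s2*y6 + (-729)*s2*y7 + s3 + (243)*s3*t0 + (-243)*s3*t1 + (-486)*s3*t2 + (-81)*s3*t3 + (162)*s3*t5 + (3)*s3*v0 + (-3)*s3*v1 + (-6)*s3*v2 + (-3)*s3*v3 + (18)*s3*v5 +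 (486)*s3*y6 + (243)*s4*t0 + (-486)*s4*t1 + (-486)*s4*t2 + (-162)*s4*t3 + (243)*s4*t5 + (3)*s4*v0 + (-6)*s4*v1 + (-6)*s4*v2 + (-6)*s4*v3 + (27)*s4*v5 + (972)*s4*y6 + (243)*s4*y7 + (-729)*s5*t1 + (-243)*s5*t2 + (-162)*s5*t3 + (-81)*s5*t4 + (-9)*s5*v1 + (-3)*s5*v2 + (-6)*s5*v3 + (-9)*s5*v4 + (-972)*s5*y6 + (-729)*s5*y7 + (-9)*t0*u0 + (9)*t0*u1 + (9)*t0*u3 + (27)*t0*u4 + (-2187)*t0*x6 + (-1458)*t0*x7 + (-9)*t1*u0 + (18)*t1*u1 + (9)*t1*u2 + (-9)*t1*u3 + (-54)*t1*u4 + (-81)*t1*u5 + (-10935)*t1*x6 + (-7290)*t1*x7 + (18)*t2*u0 + (-18)*t2*u3 + (-54)*t2*u4 + (-27)*t2*u5 + (2187)*t2*x6 + (1458)*t2*x7 + t3 + (6)*t3*u0 + (6)*t3*u1 + (-3)*t3*u3 + (-18)*t3*u4 + (-18)*t3*u5 + (6)*t4*u1 + (-9)*t4*u5 + (-729)*t4*x6 + (-486)*t4*x7 + (15)*t5*u1 + (-3)*t5*u2 + (6)*t5*u3 + (27)*t5*u4 + (729)*t5*x6 + (486)*t5*x7 + (-18)*u0*v6 + (-18)*u0*v7 + (18)*u0*y6 + (18)*u0*y7 + (-144)*u1*v6 + (-81)*u1*v7 + (144)*u1*y6 + (81)*u1*y7 + (18)*u2*v6 + (9)*u2*v7 + (-18)*u2*y6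 + (-9)*u2*y7 + (-18)*u3*v6 + (18)*u3*y6 + (-108)*u4*v6 + (-27)*u4*v7 + (108)*u4*y6 + (27)*u4*y7 + (108)*u5*v6 + (81)*u5*v7 + (-108)*u5*y6 + (-81)*u5*y7 + (27)*u6*v0 + (135)*u6*v1 + (-27)*u6*v2 + (81)*u6*v4 + (-81)*u6*v5 + (18)*u7*v0 + (90)*u7*v1 + (-18)*u7*v2 + (54)*u7*v4 + (-54)*u7*v5 + (-27)*v0*x6 + (-18)*v0*x7 + (-135)*v1*x6 + (-90)*v1*x7 + (27)*v2*x6 + (18)*v2*x7 + (-81)*v4*x6 + (-54)*v4*x7 + (81)*v5*x6 + (54)*v5*x7)); ring.
  apply (@mod_shift _ _ 9 ((729)*s0*t0 + (-729)*s0*t2 + (-243)*s0*t3 + (9)*s0*v0 + (-9)*s0*v2 + (-9)*s0*v3 + (-729)*s0*y6 + (-729)*s0*y7 + (-1458)*s1*t1 + (-243)*s1*t3 + (-243)*s1*t4 + (-729)*s1*t5 + (-18)*s1*v1 + (-9)*s1*v3 + (-27)*s1*v4 + (-81)*s1*v5 + (-6561)*s1*y6 + (-3645)*s1*y7 + (-729)*s2*t0 + (-729)*s2*t1 + (-243)*s2*t5 + (-9)*s2*v0 + (-9)*s2*v1 + (-27)*s2*v5 + (729)*s2*y6 + (-243)*s3*t1 + (243)*s3*t2 + (-81)*s3*t4 + (-162)*s3*t5 + (-3)*s3*v1 + (3)*s3*v2 + (-9)*s3*v4 + (-18)*s3*v5 + (-243)*s3*y6 + s4 + (243)*s4*t0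 + (243)*s4*t2 + (-162)*s4*t4 + (-81)*s4*t5 + (3)*s4*v0 + (3)*s4*v2 + (-18)*s4*v4 + (-9)*s4*v5 + (-486)*s4*y6 + (243)*s5*t1 + (729)*s5*t2 + (162)*s5*t3 + (-81)*s5*t4 + (3)*s5*v1 + (9)*s5*v2 + (6)*s5*v3 + (-9)*s5*v4 + (729)*s5*y6 + (486)*s5*y7 + (9)*t0*u0 + (-9)*t0*u2 + (27)*t0*u4 + (1458)*t0*x6 + (729)*t0*x7 + (-18)*t1*u1 + (-9)*t1*u2 + (-9)*t1*u3 + (27)*t1*u5 + (5832)*t1*x6 + (4374)*t1*x7 + (-9)*t2*u0 + (9)*t2*u3 + (27)*t2*u4 + (81)*t2*u5 + (-1458)*t2*x6 + (-729)*t2*x7 + (-3)*t3*u0 + (-3)*t3*u1 + (18)*t3*u5 + t4 + (-3)*t4*u1 + (-3)*t4*u3 + (-18)*t4*u4 + (-9)*t4*u5 + (486)*t4*x6 + (243)*t4*x7 + (-9)*t5*u1 + (-3)*t5*u2 + (-6)*t5*u3 + (-9)*t5*u4 + (-486)*t5*x6 + (-243)*t5*x7 + (9)*u0*v6 + (9)*u0*v7 + (-9)*u0*y6 + (-9)*u0*y7 + (81)*u1*v6 + (45)*u1*v7 + (-81)*u1*y6 + (-45)*u1*y7 + (-9)*u2*v6 + (9)*u2*y6 + (9)*u3*v6 + (-9)*u3*y6 + (54)*u4*v6 + (-54)*u4*y6 + (-81)*u5*v6 + (-54)*u5*v7 + (81)*u5*y6 + (54)*u5*y7 + (-18)*u6*v0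 + (-72)*u6*v1 + (18)*u6*v2 + (-54)*u6*v4 + (54)*u6*v5 + (-9)*u7*v0 + (-54)*u7*v1 + (9)*u7*v2 + (-27)*u7*v4 + (27)*u7*v5 + (18)*v0*x6 + (9)*v0*x7 + (72)*v1*x6 + (54)*v1*x7 + (-18)*v2*x6 + (-9)*v2*x7 + (54)*v4*x6 + (27)*v4*x7 + (-54)*v5*x6 + (-27)*v5*x7)); ring.
  apply (@mod_shift _ _ 9 ((729)*s0*t1 + (243)*s0*t5 + (9)*s0*v1 + (27)*s0*v5 + (-729)*s1*t0 + (-243)*s1*t5 + (-9)*s1*v0 + (-27)*s1*v5 + (-729)*s1*y6 + (-729)*s1*y7 + (-81)*s3*t5 + (-9)*s3*v5 + (-162)*s4*t5 + (-18)*s4*v5 + s5 + (243)*s5*t0 + (-243)*s5*t2 + (3)*s5*v0 + (-3)*s5*v2 + (243)*s5*y6 + (-9)*t0*u1 + (27)*t0*u5 + (9)*t1*u0 + (729)*t1*x6 + (729)*t1*x7 + (-27)*t2*u5 + t5 + (3)*t5*u0 + (-3)*t5*u1 + (-3)*t5*u3 + (-18)*t5*u4 + (9)*u1*v6 + (9)*u1*v7 + (-9)*u1*y6 + (-9)*u1*y7 + (-27)*u5*v6 + (27)*u5*y6 + (-9)*u6*v1 + (-9)*u7*v1 + (9)*v1*x6 + (9)*v1*x7)); ring.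
Qed.

Lemma ofV_lm u u' v v' : congK u u' -> congK v v' -> ofV (lmZ u v) = ofV (lmZ u' v').
Proof. move=> H1 H2; apply: ofV_eq; exact: lmZ_cong. Qed.

Lemma mul_moufang x y z : mul (mul x y) (mul z x) = mul (mul x (mul y z)) x.
Proof.
  rewrite /mul (ofV_lm (toV_ofV _) (toV_ofV _)) lmZ_moufang.
  apply: ofV_lm; last exact: congK_refl.
  apply: congK_sym. apply: congK_trans (toV_ofV _) _.
  apply: lmZ_cong; [exact: congK_refl | exact: toV_ofV].
Qed.

Lemma lmZ0l u : lmZ zero8 u = u.
Proof. destruct u; cbv beta iota delta [lmZ addv am zero8]; f_equal; ring. Qed.
Lemma lmZ0r u : lmZ u zero8 = u.
Proof. destruct u; cbv beta iota delta [lmZ addv am zero8]; f_equal; ring. Qed.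

Lemma mul1x x : mul one x = x.
Proof.
  rewrite /mul /one (@ofV_lm _ zero8 _ (toV x)); [by rewrite lmZ0l ofV_toV|exact: toV_ofV|exact: congK_refl].
Qed.
Lemma mulx1 x : mul x one = x.
Proof.
  rewrite /mul /one (@ofV_lm _ (toV x) _ zero8); [by rewrite lmZ0r ofV_toV|exact: congK_refl|exact: toV_ofV].
Qed.

Definition getc (u : v8) (k : nat) : Z :=
  match k with 0%nat => c0 u | 1%nat => c1 u | 2%nat => c2 u | 3%nat => c3 u
  | 4%nat => c4 u | 5%nat => c5 u | 6%nat => c6 u | _ => c7 u end.

Definition Kc (k : nat) : Z :=
  match k with 0%nat | 1%nat | 2%nat => 81 | 3%nat => 27 | 4%nat | 5%nat => 9 | _ => 1 end.

Lemma getc_add u v k : getc (addv u v) k = getc u k + getc v k.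
Proof. destruct u, v; do 7 (destruct k as [|k]; [reflexivity|]); reflexivity. Qed.
Lemma getc_sub u v k : getc (subv u v) k = getc u k - getc v k.
Proof. destruct u, v; do 7 (destruct k as [|k]; [reflexivity|]); reflexivity. Qed.

Lemma congK_get u v : congK u v <-> forall k, (k < 6)%nat -> getc u k mod Kc k = getc v k mod Kc k.
Proof.
  split.
  - move=> [H0 [H1 [H2 [H3 [H4 H5]]]]] k Hk.
    do 6 (destruct k as [|k]; [assumption|]). by [].
  - move=> H; rewrite /congK; do !split; [apply: (H 0%nat)|apply: (H 1%nat)|apply: (H 2%nat)
      |apply: (H 3%nat)|apply: (H 4%nat)|apply: (H 5%nat)]; by [].
Qed.

Fixpoint sat (cs : seq (nat * Z)) (u : v8) : Prop :=
  match cs with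
  | [::] => True
  | p :: cs' => (p.2 | getc u p.1) /\ sat cs' u
  end.

Fixpoint satb (cs : seq (nat * Z)) (u : v8) : bool :=
  match cs with
  | [::] => true
  | p :: cs' => (Z.eqb (getc u p.1 mod p.2) 0) && satb cs' u
  end.

Definition okK (cs : seq (nat * Z)) : bool :=
  all (fun p => (p.1 < 6)%nat && (0 <? p.2) && Z.eqb (Kc p.1 mod p.2) 0) cs.

Definition covers (cs1 cs2 : seq (nat * Z)) : bool :=
  all (fun p => (0 <? p.2) && has (fun q => (q.1 == p.1) && Z.eqb (q.2 mod p.2) 0) cs1) cs2.

Lemma satP cs u : okK cs -> satb cs u -> sat cs u.
Proof.
  elim: cs => [|[k m] cs IH] //= /andP [/andP [/andP [_ Hm] _] Hok] /andP [/Z.eqb_eq H Hs].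
  split; last exact: IH.
  apply Z.mod_divide; [move/Z.ltb_lt: Hm; lia | exact: H].
Qed.

Lemma sat_add cs u v : sat cs u -> sat cs v -> sat cs (addv u v).
Proof.
  elim: cs => [|[k m] cs IH] //= [H1 H2] [H3 H4]; split; last exact: IH.
  rewrite getc_add; exact: Z.divide_add_r.
Qed.
Lemma sat_sub cs u v : sat cs u -> sat cs v -> sat cs (subv u v).
Proof.
  elim: cs => [|[k m] cs IH] //= [H1 H2] [H3 H4]; split; last exact: IH.
  rewrite getc_sub; exact: Z.divide_sub_r.
Qed.

Lemma sat_congK cs u v : okK cs -> congK u v -> sat cs u -> sat cs v.
Proof.
  move=> Hok /congK_get HK. elim: cs Hok => [|[k m] cs IH] //= /andP [/andP [/andP [Hk Hm] /Z.eqb_eq HKm] Hok] [H1 H2].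
  split; last exact: IH.
  have HKk := HK k Hk.
  have Km : (m | Kc k) by apply Z.mod_divide; [move/Z.ltb_lt: Hm; lia|].
  have Kpos : 0 < Kc k by do 6 (destruct k as [|k]; [rewrite /=; lia|]); done.
  pose proof (Z.div_mod (getc u k) (Kc k) ltac:(lia)).
  pose proof (Z.div_mod (getc v k) (Kc k) ltac:(lia)).
  have -> : getc v k = getc u k + Kc k * (getc v k / Kc k - getc u k / Kc k) by lia.
  apply: Z.divide_add_r => //. exact: Z.divide_mul_l.
Qed.

Lemma sat_has cs1 u k m : 0 < m -> sat cs1 u ->
  has (fun q => (q.1 == k) && Z.eqb (q.2 mod m) 0) cs1 -> (m | getc u k).
Proof.
  move=> Hm. elim: cs1 => [|[k' m'] cs1 IH] //= [Hp Hs] /orP [/andP [/eqP /= Hk /Z.eqb_eq Hmm]|H].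
  - subst k'. apply: Z.divide_trans Hp. apply Z.mod_divide; [lia|exact: Hmm].
  - exact: IH.
Qed.

Lemma sat_covers cs1 cs2 u : covers cs1 cs2 -> sat cs1 u -> sat cs2 u.
Proof.
  move=> Hc H1. elim: cs2 Hc => [|[k m] cs IH] //= /andP [/andP [Hm Hhas] Hc].
  split; last exact: IH.
  apply: sat_has Hhas => //. by move/Z.ltb_lt: Hm.
Qed.
Definition dep1 : seq (nat * Z) := [:: ].

Definition dep2 : seq (nat * Z) := [:: (0%nat, 3); (1%nat, 3); (2%nat, 3); (3%nat, 3)].

Definition dep3 : seq (nat * Z) := [:: (0%nat, 9); (1%nat, 9); (2%nat, 9); (3%nat, 9); (4%nat, 3); (5%nat, 3)].

Definition dep4 : seq (nat * Z) := [:: (0%nat, 27); (1%nat, 27); (2%nat, 27); (3%nat, 27); (4%nat, 9); (5%nat, 9)].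

Definition dep5 : seq (nat * Z) := [:: (0%nat, 81); (1%nat, 81); (2%nat, 81); (3%nat, 27); (4%nat, 9); (5%nat, 9)].

Lemma amL1 A W : sat dep1 W -> sat dep2 (am A W).
Proof.
  destruct A as [a0 a1 a2 a3 a4 a5 a6 a7], W as [w0 w1 w2 w3 w4 w5 w6 w7].
  cbn [sat dep1 dep2 getc fst snd c0 c1 c2 c3 c4 c5 c6 c7].
  intros _.
  cbv beta iota delta [am c0 c1 c2 c3 c4 c5 c6 c7].
  split; [exists ((2)*a0*w0 + (-1)*a0*w1 + (-1)*a0*w3 + (-6)*a0*w4 + (-6)*a1*w5 + (-243)*a1*w6 + (-162)*a1*w7 + (-1)*a2*w0 + (-6)*a2*w5 + (81)*a2*w6 + (-6)*a3*w5 + (-243)*a4*w6 + (6)*a5*w1 + (6)*a5*w2 + (6)*a5*w3 + (243)*a5*w6 + (81)*a6*w0 + (243)*a6*w1 + (-81)*a6*w2 + (243)*a6*w4 + (-243)*a6*w5 + (162)*a7*w1); ring|].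
  split; [exists (a0*w1 + a1*w0 + (-1)*a1*w1 + (-1)*a1*w3 + (-6)*a1*w4 + (-3)*a1*w5 + (-1)*a2*w1 + (3)*a2*w5 + (-9)*a4*w5 + (3)*a5*w1 + (-3)*a5*w2 + (9)*a5*w4 + (81)*a6*w1); ring|].
  split; [exists (a0*w0 + (-1)*a0*w3 + (-3)*a0*w4 + (-81)*a0*w6 + (-81)*a0*w7 + (-2)*a1*w1 + (-2)*a1*w2 + (-2)*a1*w3 + (-12)*a1*w5 + (-891)*a1*w6 + (-486)*a1*w7 + (-1)*a2*w2 + (162)*a2*w6 + (-6)*a3*w5 + (-81)*a3*w6 + (-18)*a4*w5 + (-729)*a4*w6 + (6)*a5*w1 + (6)*a5*w2 + (6)*a5*w3 + (729)*a5*w6 + (486)*a5*w7 + (162)*a6*w0 + (810)*a6*w1 + (-162)*a6*w2 + (486)*a6*w4 + (-486)*a6*w5 + (81)*a7*w0 + (567)*a7*w1 + (-81)*a7*w2 + (243)*a7*w4 + (-243)*a7*w5); ring|].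
  split; [exists ((-1)*a0*w0 + (-1)*a0*w1 + (2)*a0*w2 + (2)*a0*w3 + (162)*a0*w6 + (162)*a0*w7 + a1*w0 + (2)*a1*w1 + (2)*a1*w3 + (6)*a1*w4 + (15)*a1*w5 + (1296)*a1*w6 + (729)*a1*w7 + a2*w1 + (-3)*a2*w5 + (-162)*a2*w6 + (-81)*a2*w7 + a3*w0 + (-1)*a3*w1 + (-2)*a3*w2 + (-1)*a3*w3 + (6)*a3*w5 + (162)*a3*w6 + (3)*a4*w0 + (-6)*a4*w1 + (-6)*a4*w2 + (-6)*a4*w3 + (27)*a4*w5 + (972)*a4*w6 + (243)*a4*w7 + (-9)*a5*w1 + (-3)*a5*w2 + (-6)*a5*w3 + (-9)*a5*w4 + (-972)*a5*w6 + (-729)*a5*w7 + (-243)*a6*w0 + (-1215)*a6*w1 + (243)*a6*w2 + (-729)*a6*w4 + (729)*a6*w5 + (-162)*a7*w0 + (-810)*a7*w1 + (162)*a7*w2 + (-486)*a7*w4 + (486)*a7*w5); ring|].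
  exact I.
Qed.

Lemma amL2 A W : sat dep2 W -> sat dep3 (am A W).
Proof.
  destruct A as [a0 a1 a2 a3 a4 a5 a6 a7], W as [w0 w1 w2 w3 w4 w5 w6 w7].
  cbn [sat dep2 dep3 getc fst snd c0 c1 c2 c3 c4 c5 c6 c7].
  intros [[q0 ->] [[q1 ->] [[q2 ->] [[q3 ->] _]]]].
  cbv beta iota delta [am c0 c1 c2 c3 c4 c5 c6 c7].
  split; [exists ((2)*a0*q0 + (-1)*a0*q1 + (-1)*a0*q3 + (-2)*a0*w4 + (-2)*a1*w5 + (-81)*a1*w6 + (-54)*a1*w7 + (-1)*a2*q0 + (-2)*a2*w5 + (27)*a2*w6 + (-2)*a3*w5 + (-81)*a4*w6 + (6)*a5*q1 + (6)*a5*q2 + (6)*a5*q3 + (81)*a5*w6 + (81)*a6*q0 + (243)*a6*q1 + (-81)*a6*q2 + (81)*a6*w4 + (-81)*a6*w5 + (162)*a7*q1); ring|].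
  split; [exists (a0*q1 + a1*q0 + (-1)*a1*q1 + (-1)*a1*q3 + (-2)*a1*w4 + (-1)*a1*w5 + (-1)*a2*q1 + a2*w5 + (-3)*a4*w5 + (3)*a5*q1 + (-3)*a5*q2 + (3)*a5*w4 + (81)*a6*q1); ring|].
  split; [exists (a0*q0 + (-1)*a0*q3 + (-1)*a0*w4 + (-27)*a0*w6 + (-27)*a0*w7 + (-2)*a1*q1 + (-2)*a1*q2 + (-2)*a1*q3 + (-4)*a1*w5 + (-297)*a1*w6 + (-162)*a1*w7 + (-1)*a2*q2 + (54)*a2*w6 + (-2)*a3*w5 + (-27)*a3*w6 + (-6)*a4*w5 + (-243)*a4*w6 + (6)*a5*q1 + (6)*a5*q2 + (6)*a5*q3 + (243)*a5*w6 + (162)*a5*w7 + (162)*a6*q0 + (810)*a6*q1 + (-162)*a6*q2 + (162)*a6*w4 + (-162)*a6*w5 + (81)*a7*q0 + (567)*a7*q1 + (-81)*a7*q2 + (81)*a7*w4 + (-81)*a7*w5); ring|].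
  split; [exists ((-1)*a0*q0 + (-1)*a0*q1 + (2)*a0*q2 + (2)*a0*q3 + (54)*a0*w6 + (54)*a0*w7 + a1*q0 + (2)*a1*q1 + (2)*a1*q3 + (2)*a1*w4 + (5)*a1*w5 + (432)*a1*w6 + (243)*a1*w7 + a2*q1 + (-1)*a2*w5 + (-54)*a2*w6 + (-27)*a2*w7 + a3*q0 + (-1)*a3*q1 + (-2)*a3*q2 + (-1)*a3*q3 + (2)*a3*w5 + (54)*a3*w6 + (3)*a4*q0 + (-6)*a4*q1 + (-6)*a4*q2 + (-6)*a4*q3 + (9)*a4*w5 + (324)*a4*w6 + (81)*a4*w7 + (-9)*a5*q1 + (-3)*a5*q2 + (-6)*a5*q3 + (-3)*a5*w4 + (-324)*a5*w6 + (-243)*a5*w7 + (-243)*a6*q0 + (-1215)*a6*q1 + (243)*a6*q2 + (-243)*a6*w4 + (243)*a6*w5 + (-162)*a7*q0 + (-810)*a7*q1 + (162)*a7*q2 + (-162)*a7*w4 + (162)*a7*w5); ring|].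
  split; [exists (a0*q0 + (-1)*a0*q2 + (-1)*a0*q3 + (-27)*a0*w6 + (-27)*a0*w7 + (-2)*a1*q1 + (-1)*a1*q3 + (-1)*a1*w4 + (-3)*a1*w5 + (-243)*a1*w6 + (-135)*a1*w7 + (-1)*a2*q0 + (-1)*a2*q1 + (-1)*a2*w5 + (27)*a2*w6 + (-1)*a3*q1 + a3*q2 + (-1)*a3*w4 + (-2)*a3*w5 + (-27)*a3*w6 + (3)*a4*q0 + (3)*a4*q2 + (-6)*a4*w4 + (-3)*a4*w5 + (-162)*a4*w6 + (3)*a5*q1 + (9)*a5*q2 + (6)*a5*q3 + (-3)*a5*w4 + (243)*a5*w6 + (162)*a5*w7 + (162)*a6*q0 + (648)*a6*q1 + (-162)*a6*q2 + (162)*a6*w4 + (-162)*a6*w5 + (81)*a7*q0 + (486)*a7*q1 + (-81)*a7*q2 + (81)*a7*w4 + (-81)*a7*w5); ring|].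
  split; [exists (a0*q1 + a0*w5 + (-1)*a1*q0 + (-1)*a1*w5 + (-27)*a1*w6 + (-27)*a1*w7 + (-1)*a3*w5 + (-6)*a4*w5 + (3)*a5*q0 + (-3)*a5*q2 + (81)*a5*w6 + (81)*a6*q1 + (81)*a7*q1); ring|].
  exact I.
Qed.

Lemma amL3 A W : sat dep3 W -> sat dep4 (am A W).
Proof.
  destruct A as [a0 a1 a2 a3 a4 a5 a6 a7], W as [w0 w1 w2 w3 w4 w5 w6 w7].
  cbn [sat dep3 dep4 getc fst snd c0 c1 c2 c3 c4 c5 c6 c7].
  intros [[q0 ->] [[q1 ->] [[q2 ->] [[q3 ->] [[q4 ->] [[q5 ->] _]]]]]].
  cbv beta iota delta [am c0 c1 c2 c3 c4 c5 c6 c7].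
  split; [exists ((2)*a0*q0 + (-1)*a0*q1 + (-1)*a0*q3 + (-2)*a0*q4 + (-2)*a1*q5 + (-27)*a1*w6 + (-18)*a1*w7 + (-1)*a2*q0 + (-2)*a2*q5 + (9)*a2*w6 + (-2)*a3*q5 + (-27)*a4*w6 + (6)*a5*q1 + (6)*a5*q2 + (6)*a5*q3 + (27)*a5*w6 + (81)*a6*q0 + (243)*a6*q1 + (-81)*a6*q2 + (81)*a6*q4 + (-81)*a6*q5 + (162)*a7*q1); ring|].
  split; [exists (a0*q1 + a1*q0 + (-1)*a1*q1 + (-1)*a1*q3 + (-2)*a1*q4 + (-1)*a1*q5 + (-1)*a2*q1 + a2*q5 + (-3)*a4*q5 + (3)*a5*q1 + (-3)*a5*q2 + (3)*a5*q4 + (81)*a6*q1); ring|].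
  split; [exists (a0*q0 + (-1)*a0*q3 + (-1)*a0*q4 + (-9)*a0*w6 + (-9)*a0*w7 + (-2)*a1*q1 + (-2)*a1*q2 + (-2)*a1*q3 + (-4)*a1*q5 + (-99)*a1*w6 + (-54)*a1*w7 + (-1)*a2*q2 + (18)*a2*w6 + (-2)*a3*q5 + (-9)*a3*w6 + (-6)*a4*q5 + (-81)*a4*w6 + (6)*a5*q1 + (6)*a5*q2 + (6)*a5*q3 + (81)*a5*w6 + (54)*a5*w7 + (162)*a6*q0 + (810)*a6*q1 + (-162)*a6*q2 + (162)*a6*q4 + (-162)*a6*q5 + (81)*a7*q0 + (567)*a7*q1 + (-81)*a7*q2 + (81)*a7*q4 + (-81)*a7*q5); ring|].
  split; [exists ((-1)*a0*q0 + (-1)*a0*q1 + (2)*a0*q2 + (2)*a0*q3 + (18)*a0*w6 + (18)*a0*w7 + a1*q0 + (2)*a1*q1 + (2)*a1*q3 + (2)*a1*q4 + (5)*a1*q5 + (144)*a1*w6 + (81)*a1*w7 + a2*q1 + (-1)*a2*q5 + (-18)*a2*w6 + (-9)*a2*w7 + a3*q0 + (-1)*a3*q1 + (-2)*a3*q2 + (-1)*a3*q3 + (2)*a3*q5 + (18)*a3*w6 + (3)*a4*q0 + (-6)*a4*q1 + (-6)*a4*q2 + (-6)*a4*q3 + (9)*a4*q5 + (108)*a4*w6 + (27)*a4*w7 + (-9)*a5*q1 + (-3)*a5*q2 + (-6)*a5*q3 + (-3)*a5*q4 + (-108)*a5*w6 + (-81)*a5*w7 + (-243)*a6*q0 + (-1215)*a6*q1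 + (243)*a6*q2 + (-243)*a6*q4 + (243)*a6*q5 + (-162)*a7*q0 + (-810)*a7*q1 + (162)*a7*q2 + (-162)*a7*q4 + (162)*a7*q5); ring|].
  split; [exists (a0*q0 + (-1)*a0*q2 + (-1)*a0*q3 + (-9)*a0*w6 + (-9)*a0*w7 + (-2)*a1*q1 + (-1)*a1*q3 + (-1)*a1*q4 + (-3)*a1*q5 + (-81)*a1*w6 + (-45)*a1*w7 + (-1)*a2*q0 + (-1)*a2*q1 + (-1)*a2*q5 + (9)*a2*w6 + (-1)*a3*q1 + a3*q2 + (-1)*a3*q4 + (-2)*a3*q5 + (-9)*a3*w6 + (3)*a4*q0 + (3)*a4*q2 + (-6)*a4*q4 + (-3)*a4*q5 + (-54)*a4*w6 + (3)*a5*q1 + (9)*a5*q2 + (6)*a5*q3 + (-3)*a5*q4 + (81)*a5*w6 + (54)*a5*w7 + (162)*a6*q0 + (648)*a6*q1 + (-162)*a6*q2 + (162)*a6*q4 + (-162)*a6*q5 + (81)*a7*q0 + (486)*a7*q1 + (-81)*a7*q2 + (81)*a7*q4 + (-81)*a7*q5); ring|].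
  split; [exists (a0*q1 + a0*q5 + (-1)*a1*q0 + (-1)*a1*q5 + (-9)*a1*w6 + (-9)*a1*w7 + (-1)*a3*q5 + (-6)*a4*q5 + (3)*a5*q0 + (-3)*a5*q2 + (27)*a5*w6 + (81)*a6*q1 + (81)*a7*q1); ring|].
  exact I.
Qed.

Lemma amL4 A W : sat dep4 W -> sat dep5 (am A W).
Proof.
  destruct A as [a0 a1 a2 a3 a4 a5 a6 a7], W as [w0 w1 w2 w3 w4 w5 w6 w7].
  cbn [sat dep4 dep5 getc fst snd c0 c1 c2 c3 c4 c5 c6 c7].
  intros [[q0 ->] [[q1 ->] [[q2 ->] [[q3 ->] [[q4 ->] [[q5 ->] _]]]]]].
  cbv beta iota delta [am c0 c1 c2 c3 c4 c5 c6 c7].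
  split; [exists ((2)*a0*q0 + (-1)*a0*q1 + (-1)*a0*q3 + (-2)*a0*q4 + (-2)*a1*q5 + (-9)*a1*w6 + (-6)*a1*w7 + (-1)*a2*q0 + (-2)*a2*q5 + (3)*a2*w6 + (-2)*a3*q5 + (-9)*a4*w6 + (6)*a5*q1 + (6)*a5*q2 + (6)*a5*q3 + (9)*a5*w6 + (81)*a6*q0 + (243)*a6*q1 + (-81)*a6*q2 + (81)*a6*q4 + (-81)*a6*q5 + (162)*a7*q1); ring|].
  split; [exists (a0*q1 + a1*q0 + (-1)*a1*q1 + (-1)*a1*q3 + (-2)*a1*q4 + (-1)*a1*q5 + (-1)*a2*q1 + a2*q5 + (-3)*a4*q5 + (3)*a5*q1 + (-3)*a5*q2 + (3)*a5*q4 + (81)*a6*q1); ring|].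
  split; [exists (a0*q0 + (-1)*a0*q3 + (-1)*a0*q4 + (-3)*a0*w6 + (-3)*a0*w7 + (-2)*a1*q1 + (-2)*a1*q2 + (-2)*a1*q3 + (-4)*a1*q5 + (-33)*a1*w6 + (-18)*a1*w7 + (-1)*a2*q2 + (6)*a2*w6 + (-2)*a3*q5 + (-3)*a3*w6 + (-6)*a4*q5 + (-27)*a4*w6 + (6)*a5*q1 + (6)*a5*q2 + (6)*a5*q3 + (27)*a5*w6 + (18)*a5*w7 + (162)*a6*q0 + (810)*a6*q1 + (-162)*a6*q2 + (162)*a6*q4 + (-162)*a6*q5 + (81)*a7*q0 + (567)*a7*q1 + (-81)*a7*q2 + (81)*a7*q4 + (-81)*a7*q5); ring|].
  split; [exists ((-3)*a0*q0 + (-3)*a0*q1 + (6)*a0*q2 + (6)*a0*q3 + (18)*a0*w6 + (18)*a0*w7 + (3)*a1*q0 + (6)*a1*q1 + (6)*a1*q3 + (6)*a1*q4 + (15)*a1*q5 + (144)*a1*w6 + (81)*a1*w7 + (3)*a2*q1 + (-3)*a2*q5 + (-18)*a2*w6 + (-9)*a2*w7 + (3)*a3*q0 + (-3)*a3*q1 + (-6)*a3*q2 + (-3)*a3*q3 + (6)*a3*q5 + (18)*a3*w6 + (9)*a4*q0 + (-18)*a4*q1 + (-18)*a4*q2 + (-18)*a4*q3 + (27)*a4*q5 + (108)*a4*w6 + (27)*a4*w7 + (-27)*a5*q1 + (-9)*a5*q2 + (-18)*a5*q3 + (-9)*a5*q4 + (-108)*a5*w6 + (-81)*a5*w7 + (-729)*a6*q0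 + (-3645)*a6*q1 + (729)*a6*q2 + (-729)*a6*q4 + (729)*a6*q5 + (-486)*a7*q0 + (-2430)*a7*q1 + (486)*a7*q2 + (-486)*a7*q4 + (486)*a7*q5); ring|].
  split; [exists ((3)*a0*q0 + (-3)*a0*q2 + (-3)*a0*q3 + (-9)*a0*w6 + (-9)*a0*w7 + (-6)*a1*q1 + (-3)*a1*q3 + (-3)*a1*q4 + (-9)*a1*q5 + (-81)*a1*w6 + (-45)*a1*w7 + (-3)*a2*q0 + (-3)*a2*q1 + (-3)*a2*q5 + (9)*a2*w6 + (-3)*a3*q1 + (3)*a3*q2 + (-3)*a3*q4 + (-6)*a3*q5 + (-9)*a3*w6 + (9)*a4*q0 + (9)*a4*q2 + (-18)*a4*q4 + (-9)*a4*q5 + (-54)*a4*w6 + (9)*a5*q1 + (27)*a5*q2 + (18)*a5*q3 + (-9)*a5*q4 + (81)*a5*w6 + (54)*a5*w7 + (486)*a6*q0 + (1944)*a6*q1 + (-486)*a6*q2 + (486)*a6*q4 + (-486)*a6*q5 + (243)*a7*q0 + (1458)*a7*q1 + (-243)*a7*q2 + (243)*a7*q4 + (-243)*a7*q5); ring|].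
  split; [exists ((3)*a0*q1 + (3)*a0*q5 + (-3)*a1*q0 + (-3)*a1*q5 + (-9)*a1*w6 + (-9)*a1*w7 + (-3)*a3*q5 + (-18)*a4*q5 + (9)*a5*q0 + (-9)*a5*q2 + (27)*a5*w6 + (243)*a6*q1 + (243)*a7*q1); ring|].
  exact I.
Qed.

Lemma amR1 W A : sat dep1 W -> sat dep2 (am W A).
Proof.
  destruct A as [a0 a1 a2 a3 a4 a5 a6 a7], W as [w0 w1 w2 w3 w4 w5 w6 w7].
  cbn [sat dep1 dep2 getc fst snd c0 c1 c2 c3 c4 c5 c6 c7].
  intros _.
  cbv beta iota delta [am c0 c1 c2 c3 c4 c5 c6 c7].
  split; [exists ((2)*a0*w0 + (-1)*a0*w2 + (81)*a0*w6 + (-1)*a1*w0 + (6)*a1*w5 + (243)*a1*w6 + (162)*a1*w7 + (6)*a2*w5 + (-81)*a2*w6 + (-1)*a3*w0 + (6)*a3*w5 + (-6)*a4*w0 + (243)*a4*w6 + (-6)*a5*w1 + (-6)*a5*w2 + (-6)*a5*w3 + (-243)*a5*w6 + (-243)*a6*w1 + (81)*a6*w2 + (-243)*a6*w4 + (243)*a6*w5 + (-162)*a7*w1); ring|].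
  split; [exists (a0*w1 + a1*w0 + (-1)*a1*w1 + (-1)*a1*w2 + (3)*a1*w5 + (81)*a1*w6 + (-3)*a2*w5 + (-1)*a3*w1 + (-6)*a4*w1 + (9)*a4*w5 + (-3)*a5*w1 + (3)*a5*w2 + (-9)*a5*w4); ring|].
  split; [exists (a0*w0 + (162)*a0*w6 + (81)*a0*w7 + (-2)*a1*w1 + (6)*a1*w5 + (810)*a1*w6 + (567)*a1*w7 + (-2)*a2*w1 + (-1)*a2*w2 + (6)*a2*w5 + (-162)*a2*w6 + (-81)*a2*w7 + (-1)*a3*w0 + (-2)*a3*w1 + (6)*a3*w5 + (-3)*a4*w0 + (486)*a4*w6 + (243)*a4*w7 + (-12)*a5*w1 + (-6)*a5*w3 + (-18)*a5*w4 + (-486)*a5*w6 + (-243)*a5*w7 + (-81)*a6*w0 + (-891)*a6*w1 + (162)*a6*w2 + (-81)*a6*w3 + (-729)*a6*w4 + (729)*a6*w5 + (-81)*a7*w0 + (-486)*a7*w1 + (486)*a7*w5); ring|].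
  split; [exists ((-1)*a0*w0 + a0*w1 + a0*w3 + (3)*a0*w4 + (-243)*a0*w6 + (-162)*a0*w7 + (-1)*a1*w0 + (2)*a1*w1 + a1*w2 + (-1)*a1*w3 + (-6)*a1*w4 + (-9)*a1*w5 + (-1215)*a1*w6 + (-810)*a1*w7 + (2)*a2*w0 + (-2)*a2*w3 + (-6)*a2*w4 + (-3)*a2*w5 + (243)*a2*w6 + (162)*a2*w7 + (2)*a3*w0 + (2)*a3*w1 + (-1)*a3*w3 + (-6)*a3*w4 + (-6)*a3*w5 + (6)*a4*w1 + (-9)*a4*w5 + (-729)*a4*w6 + (-486)*a4*w7 + (15)*a5*w1 + (-3)*a5*w2 + (6)*a5*w3 + (27)*a5*w4 + (729)*a5*w6 + (486)*a5*w7 + (162)*a6*w0 + (1296)*a6*w1 + (-162)*a6*w2 + (162)*a6*w3 + (972)*a6*w4 + (-972)*a6*w5 + (162)*a7*w0 + (729)*a7*w1 + (-81)*a7*w2 + (243)*a7*w4 + (-729)*a7*w5); ring|].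
  exact I.
Qed.

Lemma amR2 W A : sat dep2 W -> sat dep3 (am W A).
Proof.
  destruct A as [a0 a1 a2 a3 a4 a5 a6 a7], W as [w0 w1 w2 w3 w4 w5 w6 w7].
  cbn [sat dep2 dep3 getc fst snd c0 c1 c2 c3 c4 c5 c6 c7].
  intros [[q0 ->] [[q1 ->] [[q2 ->] [[q3 ->] _]]]].
  cbv beta iota delta [am c0 c1 c2 c3 c4 c5 c6 c7].
  split; [exists ((2)*a0*q0 + (-1)*a0*q2 + (27)*a0*w6 + (-1)*a1*q0 + (2)*a1*w5 + (81)*a1*w6 + (54)*a1*w7 + (2)*a2*w5 + (-27)*a2*w6 + (-1)*a3*q0 + (2)*a3*w5 + (-6)*a4*q0 + (81)*a4*w6 + (-6)*a5*q1 + (-6)*a5*q2 + (-6)*a5*q3 + (-81)*a5*w6 + (-243)*a6*q1 + (81)*a6*q2 + (-81)*a6*w4 + (81)*a6*w5 + (-162)*a7*q1); ring|].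
  split; [exists (a0*q1 + a1*q0 + (-1)*a1*q1 + (-1)*a1*q2 + a1*w5 + (27)*a1*w6 + (-1)*a2*w5 + (-1)*a3*q1 + (-6)*a4*q1 + (3)*a4*w5 + (-3)*a5*q1 + (3)*a5*q2 + (-3)*a5*w4); ring|].
  split; [exists (a0*q0 + (54)*a0*w6 + (27)*a0*w7 + (-2)*a1*q1 + (2)*a1*w5 + (270)*a1*w6 + (189)*a1*w7 + (-2)*a2*q1 + (-1)*a2*q2 + (2)*a2*w5 + (-54)*a2*w6 + (-27)*a2*w7 + (-1)*a3*q0 + (-2)*a3*q1 + (2)*a3*w5 + (-3)*a4*q0 + (162)*a4*w6 + (81)*a4*w7 + (-12)*a5*q1 + (-6)*a5*q3 + (-6)*a5*w4 + (-162)*a5*w6 + (-81)*a5*w7 + (-81)*a6*q0 + (-891)*a6*q1 + (162)*a6*q2 + (-81)*a6*q3 + (-243)*a6*w4 + (243)*a6*w5 + (-81)*a7*q0 + (-486)*a7*q1 + (162)*a7*w5); ring|].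
  split; [exists ((-1)*a0*q0 + a0*q1 + a0*q3 + a0*w4 + (-81)*a0*w6 + (-54)*a0*w7 + (-1)*a1*q0 + (2)*a1*q1 + a1*q2 + (-1)*a1*q3 + (-2)*a1*w4 + (-3)*a1*w5 + (-405)*a1*w6 + (-270)*a1*w7 + (2)*a2*q0 + (-2)*a2*q3 + (-2)*a2*w4 + (-1)*a2*w5 + (81)*a2*w6 + (54)*a2*w7 + (2)*a3*q0 + (2)*a3*q1 + (-1)*a3*q3 + (-2)*a3*w4 + (-2)*a3*w5 + (6)*a4*q1 + (-3)*a4*w5 + (-243)*a4*w6 + (-162)*a4*w7 + (15)*a5*q1 + (-3)*a5*q2 + (6)*a5*q3 + (9)*a5*w4 + (243)*a5*w6 + (162)*a5*w7 + (162)*a6*q0 + (1296)*a6*q1 + (-162)*a6*q2 + (162)*a6*q3 + (324)*a6*w4 + (-324)*a6*w5 + (162)*a7*q0 + (729)*a7*q1 + (-81)*a7*q2 + (81)*a7*w4 + (-243)*a7*w5); ring|].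
  split; [exists (a0*q0 + (-1)*a0*q2 + a0*w4 + (54)*a0*w6 + (27)*a0*w7 + (-2)*a1*q1 + (-1)*a1*q2 + (-1)*a1*q3 + a1*w5 + (216)*a1*w6 + (162)*a1*w7 + (-1)*a2*q0 + a2*q3 + a2*w4 + (3)*a2*w5 + (-54)*a2*w6 + (-27)*a2*w7 + (-1)*a3*q0 + (-1)*a3*q1 + (2)*a3*w5 + (-3)*a4*q1 + (-3)*a4*q3 + (-6)*a4*w4 + (-3)*a4*w5 + (162)*a4*w6 + (81)*a4*w7 + (-9)*a5*q1 + (-3)*a5*q2 + (-6)*a5*q3 + (-3)*a5*w4 + (-162)*a5*w6 + (-81)*a5*w7 + (-81)*a6*q0 + (-729)*a6*q1 + (81)*a6*q2 + (-81)*a6*q3 + (-162)*a6*w4 + (243)*a6*w5 + (-81)*a7*q0 + (-405)*a7*q1 + (162)*a7*w5); ring|].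
  split; [exists ((-1)*a0*q1 + a0*w5 + a1*q0 + (27)*a1*w6 + (27)*a1*w7 + (-1)*a2*w5 + (3)*a5*q0 + (-3)*a5*q1 + (-3)*a5*q3 + (-6)*a5*w4 + (-81)*a6*q1 + (81)*a6*w5 + (-81)*a7*q1); ring|].
  exact I.
Qed.

Lemma amR3 W A : sat dep3 W -> sat dep4 (am W A).
Proof.
  destruct A as [a0 a1 a2 a3 a4 a5 a6 a7], W as [w0 w1 w2 w3 w4 w5 w6 w7].
  cbn [sat dep3 dep4 getc fst snd c0 c1 c2 c3 c4 c5 c6 c7].
  intros [[q0 ->] [[q1 ->] [[q2 ->] [[q3 ->] [[q4 ->] [[q5 ->] _]]]]]].
  cbv beta iota delta [am c0 c1 c2 c3 c4 c5 c6 c7].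
  split; [exists ((2)*a0*q0 + (-1)*a0*q2 + (9)*a0*w6 + (-1)*a1*q0 + (2)*a1*q5 + (27)*a1*w6 + (18)*a1*w7 + (2)*a2*q5 + (-9)*a2*w6 + (-1)*a3*q0 + (2)*a3*q5 + (-6)*a4*q0 + (27)*a4*w6 + (-6)*a5*q1 + (-6)*a5*q2 + (-6)*a5*q3 + (-27)*a5*w6 + (-243)*a6*q1 + (81)*a6*q2 + (-81)*a6*q4 + (81)*a6*q5 + (-162)*a7*q1); ring|].
  split; [exists (a0*q1 + a1*q0 + (-1)*a1*q1 + (-1)*a1*q2 + a1*q5 + (9)*a1*w6 + (-1)*a2*q5 + (-1)*a3*q1 + (-6)*a4*q1 + (3)*a4*q5 + (-3)*a5*q1 + (3)*a5*q2 + (-3)*a5*q4); ring|].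
  split; [exists (a0*q0 + (18)*a0*w6 + (9)*a0*w7 + (-2)*a1*q1 + (2)*a1*q5 + (90)*a1*w6 + (63)*a1*w7 + (-2)*a2*q1 + (-1)*a2*q2 + (2)*a2*q5 + (-18)*a2*w6 + (-9)*a2*w7 + (-1)*a3*q0 + (-2)*a3*q1 + (2)*a3*q5 + (-3)*a4*q0 + (54)*a4*w6 + (27)*a4*w7 + (-12)*a5*q1 + (-6)*a5*q3 + (-6)*a5*q4 + (-54)*a5*w6 + (-27)*a5*w7 + (-81)*a6*q0 + (-891)*a6*q1 + (162)*a6*q2 + (-81)*a6*q3 + (-243)*a6*q4 + (243)*a6*q5 + (-81)*a7*q0 + (-486)*a7*q1 + (162)*a7*q5); ring|].
  split; [exists ((-1)*a0*q0 + a0*q1 + a0*q3 + a0*q4 + (-27)*a0*w6 + (-18)*a0*w7 + (-1)*a1*q0 + (2)*a1*q1 + a1*q2 + (-1)*a1*q3 + (-2)*a1*q4 + (-3)*a1*q5 + (-135)*a1*w6 + (-90)*a1*w7 + (2)*a2*q0 + (-2)*a2*q3 + (-2)*a2*q4 + (-1)*a2*q5 + (27)*a2*w6 + (18)*a2*w7 + (2)*a3*q0 + (2)*a3*q1 + (-1)*a3*q3 + (-2)*a3*q4 + (-2)*a3*q5 + (6)*a4*q1 + (-3)*a4*q5 + (-81)*a4*w6 + (-54)*a4*w7 + (15)*a5*q1 + (-3)*a5*q2 + (6)*a5*q3 + (9)*a5*q4 + (81)*a5*w6 + (54)*a5*w7 + (162)*a6*q0 + (1296)*a6*q1 + (-162)*a6*q2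 + (162)*a6*q3 + (324)*a6*q4 + (-324)*a6*q5 + (162)*a7*q0 + (729)*a7*q1 + (-81)*a7*q2 + (81)*a7*q4 + (-243)*a7*q5); ring|].
  split; [exists (a0*q0 + (-1)*a0*q2 + a0*q4 + (18)*a0*w6 + (9)*a0*w7 + (-2)*a1*q1 + (-1)*a1*q2 + (-1)*a1*q3 + a1*q5 + (72)*a1*w6 + (54)*a1*w7 + (-1)*a2*q0 + a2*q3 + a2*q4 + (3)*a2*q5 + (-18)*a2*w6 + (-9)*a2*w7 + (-1)*a3*q0 + (-1)*a3*q1 + (2)*a3*q5 + (-3)*a4*q1 + (-3)*a4*q3 + (-6)*a4*q4 + (-3)*a4*q5 + (54)*a4*w6 + (27)*a4*w7 + (-9)*a5*q1 + (-3)*a5*q2 + (-6)*a5*q3 + (-3)*a5*q4 + (-54)*a5*w6 + (-27)*a5*w7 + (-81)*a6*q0 + (-729)*a6*q1 + (81)*a6*q2 + (-81)*a6*q3 + (-162)*a6*q4 + (243)*a6*q5 + (-81)*a7*q0 + (-405)*a7*q1 + (162)*a7*q5); ring|].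
  split; [exists ((-1)*a0*q1 + a0*q5 + a1*q0 + (9)*a1*w6 + (9)*a1*w7 + (-1)*a2*q5 + (3)*a5*q0 + (-3)*a5*q1 + (-3)*a5*q3 + (-6)*a5*q4 + (-81)*a6*q1 + (81)*a6*q5 + (-81)*a7*q1); ring|].
  exact I.
Qed.

Lemma amR4 W A : sat dep4 W -> sat dep5 (am W A).
Proof.
  destruct A as [a0 a1 a2 a3 a4 a5 a6 a7], W as [w0 w1 w2 w3 w4 w5 w6 w7].
  cbn [sat dep4 dep5 getc fst snd c0 c1 c2 c3 c4 c5 c6 c7].
  intros [[q0 ->] [[q1 ->] [[q2 ->] [[q3 ->] [[q4 ->] [[q5 ->] _]]]]]].
  cbv beta iota delta [am c0 c1 c2 c3 c4 c5 c6 c7].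
  split; [exists ((2)*a0*q0 + (-1)*a0*q2 + (3)*a0*w6 + (-1)*a1*q0 + (2)*a1*q5 + (9)*a1*w6 + (6)*a1*w7 + (2)*a2*q5 + (-3)*a2*w6 + (-1)*a3*q0 + (2)*a3*q5 + (-6)*a4*q0 + (9)*a4*w6 + (-6)*a5*q1 + (-6)*a5*q2 + (-6)*a5*q3 + (-9)*a5*w6 + (-243)*a6*q1 + (81)*a6*q2 + (-81)*a6*q4 + (81)*a6*q5 + (-162)*a7*q1); ring|].
  split; [exists (a0*q1 + a1*q0 + (-1)*a1*q1 + (-1)*a1*q2 + a1*q5 + (3)*a1*w6 + (-1)*a2*q5 + (-1)*a3*q1 + (-6)*a4*q1 + (3)*a4*q5 + (-3)*a5*q1 + (3)*a5*q2 + (-3)*a5*q4); ring|].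
  split; [exists (a0*q0 + (6)*a0*w6 + (3)*a0*w7 + (-2)*a1*q1 + (2)*a1*q5 + (30)*a1*w6 + (21)*a1*w7 + (-2)*a2*q1 + (-1)*a2*q2 + (2)*a2*q5 + (-6)*a2*w6 + (-3)*a2*w7 + (-1)*a3*q0 + (-2)*a3*q1 + (2)*a3*q5 + (-3)*a4*q0 + (18)*a4*w6 + (9)*a4*w7 + (-12)*a5*q1 + (-6)*a5*q3 + (-6)*a5*q4 + (-18)*a5*w6 + (-9)*a5*w7 + (-81)*a6*q0 + (-891)*a6*q1 + (162)*a6*q2 + (-81)*a6*q3 + (-243)*a6*q4 + (243)*a6*q5 + (-81)*a7*q0 + (-486)*a7*q1 + (162)*a7*q5); ring|].
  split; [exists ((-3)*a0*q0 + (3)*a0*q1 + (3)*a0*q3 + (3)*a0*q4 + (-27)*a0*w6 + (-18)*a0*w7 + (-3)*a1*q0 + (6)*a1*q1 + (3)*a1*q2 + (-3)*a1*q3 + (-6)*a1*q4 + (-9)*a1*q5 + (-135)*a1*w6 + (-90)*a1*w7 + (6)*a2*q0 + (-6)*a2*q3 + (-6)*a2*q4 + (-3)*a2*q5 + (27)*a2*w6 + (18)*a2*w7 + (6)*a3*q0 + (6)*a3*q1 + (-3)*a3*q3 + (-6)*a3*q4 + (-6)*a3*q5 + (18)*a4*q1 + (-9)*a4*q5 + (-81)*a4*w6 + (-54)*a4*w7 + (45)*a5*q1 + (-9)*a5*q2 + (18)*a5*q3 + (27)*a5*q4 + (81)*a5*w6 + (54)*a5*w7 + (486)*a6*q0 +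 (3888)*a6*q1 + (-486)*a6*q2 + (486)*a6*q3 + (972)*a6*q4 + (-972)*a6*q5 + (486)*a7*q0 + (2187)*a7*q1 + (-243)*a7*q2 + (243)*a7*q4 + (-729)*a7*q5); ring|].
  split; [exists ((3)*a0*q0 + (-3)*a0*q2 + (3)*a0*q4 + (18)*a0*w6 + (9)*a0*w7 + (-6)*a1*q1 + (-3)*a1*q2 + (-3)*a1*q3 + (3)*a1*q5 + (72)*a1*w6 + (54)*a1*w7 + (-3)*a2*q0 + (3)*a2*q3 + (3)*a2*q4 + (9)*a2*q5 + (-18)*a2*w6 + (-9)*a2*w7 + (-3)*a3*q0 + (-3)*a3*q1 + (6)*a3*q5 + (-9)*a4*q1 + (-9)*a4*q3 + (-18)*a4*q4 + (-9)*a4*q5 + (54)*a4*w6 + (27)*a4*w7 + (-27)*a5*q1 + (-9)*a5*q2 + (-18)*a5*q3 + (-9)*a5*q4 + (-54)*a5*w6 + (-27)*a5*w7 + (-243)*a6*q0 + (-2187)*a6*q1 + (243)*a6*q2 + (-243)*a6*q3 + (-486)*a6*q4 + (729)*a6*q5 + (-243)*a7*q0 + (-1215)*a7*q1 + (486)*a7*q5); ring|].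
  split; [exists ((-3)*a0*q1 + (3)*a0*q5 + (3)*a1*q0 + (9)*a1*w6 + (9)*a1*w7 + (-3)*a2*q5 + (9)*a5*q0 + (-9)*a5*q1 + (-9)*a5*q3 + (-18)*a5*q4 + (-243)*a6*q1 + (243)*a6*q5 + (-243)*a7*q1); ring|].
  exact I.
Qed.

Lemma getc_zero k : getc zero8 k = 0.
Proof. do 7 (destruct k as [|k]; [reflexivity|]); reflexivity. Qed.

Lemma sat_zero cs : sat cs zero8.
Proof. elim: cs => [|p cs IH] //=; split => //; rewrite getc_zero; exact: Z.divide_0_r. Qed.

Lemma mod_sub0 a b K : 0 < K -> (a - b) mod K = 0 mod K -> a mod K = b mod K.
Proof.
  move=> HK /(cong_shift HK) [q Hq]. symmetry. apply: (@mod_shift b a K (- q)). lia.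
Qed.

Lemma Kc_pos k : 0 < Kc k.
Proof. do 7 (destruct k as [|k]; [rewrite /=; lia|]); rewrite /=; lia. Qed.

Lemma congK_subv p q : congK p q -> congK (subv p q) zero8.
Proof.
  move/congK_get=> H; apply/congK_get => k Hk.
  rewrite getc_sub getc_zero Zminus_mod H // -Zminus_mod Z.sub_diag //.
Qed.

Lemma congK_of_sub p q : congK (subv p q) zero8 -> congK p q.
Proof.
  move/congK_get=> H; apply/congK_get => k Hk.
  apply: mod_sub0; first exact: Kc_pos. by rewrite -getc_sub -(getc_zero k) H.
Qed.

Lemma depstep cs W M : okK cs -> sat cs M -> congK (addv W M) zero8 -> sat cs W.
Proof.
  move=> Hok HM HWM.
  have H1 : sat cs (addv W M) by apply: (sat_congK Hok (congK_sym HWM)); exact: sat_zero.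
  have -> : W = subv (addv W M) M by destruct W, M; cbv beta iota delta [subv addv]; f_equal; ring.
  exact: sat_sub.
Qed.

Lemma dep5_congK W : sat dep5 W -> congK W zero8.
Proof.
  destruct W as [w0 w1 w2 w3 w4 w5 w6 w7].
  cbn [sat dep5 getc fst snd c0 c1 c2 c3 c4 c5 c6 c7].
  move=> [[q0 ->] [[q1 ->] [[q2 ->] [[q3 ->] [[q4 ->] [[q5 ->] _]]]]]].
  rewrite /congK /zero8 /=. rewrite !Z.mod_mul //.
Qed.

Lemma lmZ_subL A X Y : subv (lmZ A X) (lmZ A Y) = addv (subv X Y) (am A (subv X Y)).
Proof. destruct A, X, Y; cbv beta iota delta [subv addv lmZ am]; f_equal; ring. Qed.
Lemma lmZ_subR A X Y : subv (lmZ X A) (lmZ Y A) = addv (subv X Y) (am (subv X Y) A).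
Proof. destruct A, X, Y; cbv beta iota delta [subv addv lmZ am]; f_equal; ring. Qed.

Lemma okdep2 : okK dep2. Proof. by vm_compute. Qed.
Lemma okdep3 : okK dep3. Proof. by vm_compute. Qed.
Lemma okdep4 : okK dep4. Proof. by vm_compute. Qed.
Lemma okdep5 : okK dep5. Proof. by vm_compute. Qed.

Lemma mul_injl a : injective (mul a).
Proof.
  move=> x y /ofV_inv /congK_subv; rewrite lmZ_subL => H.
  set W := subv (toV x) (toV y) in H.
  have d1 : sat dep1 W by [].
  have d2 := depstep okdep2 (amL1 (toV a) d1) H.
  have d3 := depstep okdep3 (amL2 (toV a) d2) H.
  have d4 := depstep okdep4 (amL3 (toV a) d3) H.
  have d5 := depstep okdep5 (amL4 (toV a) d4) H.
  by rewrite -(ofV_toV x) -(ofV_toV y); apply: ofV_eq; apply: congK_of_sub; exact: dep5_congK.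
Qed.

Lemma mul_injr a : injective (fun x => mul x a).
Proof.
  move=> x y /ofV_inv /congK_subv; rewrite lmZ_subR => H.
  set W := subv (toV x) (toV y) in H.
  have d1 : sat dep1 W by [].
  have d2 := depstep okdep2 (amR1 (toV a) d1) H.
  have d3 := depstep okdep3 (amR2 (toV a) d2) H.
  have d4 := depstep okdep4 (amR3 (toV a) d3) H.
  have d5 := depstep okdep5 (amR4 (toV a) d4) H.
  by rewrite -(ofV_toV x) -(ofV_toV y); apply: ofV_eq; apply: congK_of_sub; exact: dep5_congK.
Qed.

Lemma T_moufang : is_moufang_loop mul one.
Proof.
  split; last exact: mul_moufang.
  split; first by move=> x; rewrite mul1x mulx1.
  split.
  - move=> a b. have [g Hg1 Hg2] := injF_bij (@mul_injl a).
    exists (g b); split; first exact: Hg2.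
    by move=> x <-; rewrite Hg1.
  - move=> a b. have [g Hg1 Hg2] := injF_bij (@mul_injr a).
    exists (g b); split; first exact: (Hg2 b).
    by move=> x <-; rewrite (Hg1 x).
Qed.

Lemma inS_mul (S : {set T}) (HS : is_subloop mul one S) (x y z : T) :
  x \in S -> y \in S -> mul x y == z -> z \in S.
Proof. move: HS => [_ [H _]] Hx Hy /eqP <-; exact: H. Qed.

Lemma inS_ldiv (S : {set T}) (HS : is_subloop mul one S) (x y z : T) :
  x \in S -> y \in S -> mul x z == y -> z \in S.
Proof. move: HS => [_ [_ [H _]]] Hx Hy /eqP; exact: H. Qed.

Definition gcheck csl c pm csd (g : T) (e : Z) : bool :=
  satb csl (toV g) && satb csd (toV g) && Z.eqb (getc (toV g) c mod pm) 0
  && Z.eqb ((getc (toV g) c / pm) mod 3) e.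

Definition stepcheck csl c pm csd csd1 (g0 g1 g2 : T) : bool :=
  okK csd && okK ((c, 3 * pm) :: csl) && covers csd1 ((c, 3 * pm) :: csl) && (0 <? pm)
  && (Z.eqb pm 1 || covers csl [:: (c, pm)])
  && gcheck csl c pm csd g0 0 && gcheck csl c pm csd g1 1 && gcheck csl c pm csd g2 2.

Lemma okK_tail p cs : okK (p :: cs) -> okK cs.
Proof. by move=> /andP []. Qed.

Lemma subv_lm X G U : subv (subv (subv X G) (am G U)) U = subv X (lmZ G U).
Proof. destruct X, G, U; cbv beta iota delta [subv lmZ addv am]; f_equal; ring. Qed.

Lemma step1 (S : {set T}) (HS : is_subloop mul one S) csl c pm csd csd1 (g x : T) :
  g \in S -> (forall G U, sat csd G -> sat csd1 (am G U)) ->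
  okK csd -> okK ((c, 3 * pm) :: csl) -> covers csd1 ((c, 3 * pm) :: csl) -> 0 < pm ->
  satb csl (toV g) -> satb csd (toV g) -> (pm | getc (toV g) c) ->
  (pm | getc (toV x) c) ->
  (getc (toV g) c / pm) mod 3 = (getc (toV x) c / pm) mod 3 ->
  (forall x, sat ((c, 3 * pm) :: csl) (toV x) -> x \in S) ->
  sat csl (toV x) -> x \in S.
Proof.
  move=> Hg Ham okd ok1 cov Hpm sg dg Hgc Hxc Hres Hnext Hx.
  have okl := okK_tail ok1.
  have [f Hf1 Hf2] := injF_bij (@mul_injl g).
  set u := f x.
  have Hgu : mul g u = x by rewrite /u Hf2.
  suff Hu : u \in S by rewrite -Hgu; move: HS => [_ [Hm _]]; exact: Hm.
  apply: Hnext.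
  set G := toV g; set U := toV u; set X := toV x.
  have HC : congK (lmZ G U) X by apply: ofV_inv; rewrite ofV_toV.
  have HC2 : congK (subv (subv X G) (am G U)) U.
    apply: congK_of_sub.
    rewrite subv_lm.
    by apply: congK_subv; apply: congK_sym.
  apply: (sat_congK ok1 HC2).
  apply: sat_sub; last first.
    apply: (sat_covers cov). apply: Ham. exact: satP.
  have HXG : sat csl (subv X G) by apply: sat_sub => //; exact: satP.
  split; last exact: HXG.
  cbn [fst snd]. rewrite getc_sub.
  move: Hgc Hxc Hres => [t Ht] [s Hs].
  rewrite Ht Hs !Z.div_mul; try lia.
  move=> Hst.
  have : ((s - t) mod 3 = 0) by rewrite Zminus_mod Hst -Zminus_mod Z.sub_diag.
  move/Z.mod_divide => /(_ ltac:(lia)) [k Hk].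
  exists k. have -> : s * pm - t * pm = (s - t) * pm by ring. rewrite Hk; ring.
Qed.

Lemma step (S : {set T}) (HS : is_subloop mul one S) csl (c : nat) (pm : Z) csd csd1 (g0 g1 g2 : T) :
  g0 \in S -> g1 \in S -> g2 \in S ->
  (forall G U, sat csd G -> sat csd1 (am G U)) ->
  stepcheck csl c pm csd csd1 g0 g1 g2 ->
  (forall x, sat ((c, 3 * pm) :: csl) (toV x) -> x \in S) ->
  forall x, sat csl (toV x) -> x \in S.
Proof.
  move=> H0 H1 H2 Ham /andP [/andP [/andP [/andP [/andP [/andP [/andP [okd ok1] cov] /Z.ltb_lt Hpm] Hpmc]
    /andP [/andP [/andP [s0 d0] /Z.eqb_eq m0] /Z.eqb_eq r0]]
    /andP [/andP [/andP [s1 d1] /Z.eqb_eq m1] /Z.eqb_eq r1]]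
    /andP [/andP [/andP [s2 d2] /Z.eqb_eq m2] /Z.eqb_eq r2]] Hnext x Hx.
  have okl := okK_tail ok1.
  have Hxc : (pm | getc (toV x) c).
    case/orP: Hpmc => [/Z.eqb_eq -> | Hcov]; first exact: Z.divide_1_l.
    by have [] := sat_covers Hcov Hx.
  have Hm : forall z, z mod pm = 0 -> (pm | z) by move=> z Hz; apply Z.mod_divide; lia.
  have Hr := Z.mod_pos_bound (getc (toV x) c / pm) 3 ltac:(lia).
  have : (getc (toV x) c / pm) mod 3 = 0 \/ (getc (toV x) c / pm) mod 3 = 1 \/ (getc (toV x) c / pm) mod 3 = 2 by lia.
  case=> [Hx0|[Hx0|Hx0]].
  - apply: (step1 HS H0 Ham okd ok1 cov Hpm s0 d0 (Hm _ m0) Hxc) => //; by rewrite r0 Hx0.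
  - apply: (step1 HS H1 Ham okd ok1 cov Hpm s1 d1 (Hm _ m1) Hxc) => //; by rewrite r1 Hx0.
  - apply: (step1 HS H2 Ham okd ok1 cov Hpm s2 d2 (Hm _ m2) Hxc) => //; by rewrite r2 Hx0.
Qed.

Definition ea : T := ofV (V8 1 0 0 0 0 0 0 0).
Definition eb : T := ofV (V8 0 1 0 0 0 0 0 0).
Definition ec : T := ofV (V8 0 0 1 0 0 0 0 0).
Definition ed : T := ofV (V8 0 0 0 1 0 0 0 0).
Definition ew : T := ofV (V8 6 9 54 3 0 8 0 0).
Definition eu : T := ofV (V8 27 54 54 0 0 0 0 0).

Lemma pick_eq (P : pred T) u0 : P u0 -> (forall u, P u -> u = u0) -> odflt one [pick u | P u] = u0.
Proof. move=> Pu0 Hu. case: pickP => [u Pu /=|H]; [exact: Hu | by rewrite H in Pu0]. Qed.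

Lemma lassoc_eq x y z u0 : mul (mul x y) z == mul (mul x (mul y z)) u0 -> lassoc mul one x y z = u0.
Proof.
  move=> H. rewrite /lassoc. apply: pick_eq => // u /eqP Hu.
  apply: (@mul_injl (mul x (mul y z))). rewrite -Hu. by apply/eqP.
Qed.

Lemma lcomm_eq x y c0 : mul x y == mul (mul y x) c0 -> lcomm mul one x y = c0.
Proof.
  move=> H. rewrite /lcomm. apply: pick_eq => // u /eqP Hu.
  apply: (@mul_injl (mul y x)). rewrite -Hu. by apply/eqP.
Qed.

Lemma ea_in : ea \in lset mul one ec ed.
Proof. by rewrite inE (@lassoc_eq ea ec ed one) //; vm_compute. Qed.
Lemma eb_in : eb \in lset mul one ec ed.
Proof. by rewrite inE (@lassoc_eq eb ec ed one) //; vm_compute. Qed.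
Lemma ew_comm : lcomm mul one ea eb = ew.
Proof. apply: lcomm_eq. by vm_compute. Qed.
Lemma ew_notin : ew \notin lset mul one ec ed.
Proof. by rewrite inE (@lassoc_eq ew ec ed eu); vm_compute. Qed.

Lemma not_sub : ~ is_subloop mul one (lset mul one ec ed).
Proof.
  move=> [_ [H2 [H3 _]]].
  have Hab := H2 _ _ ea_in eb_in. have Hba := H2 _ _ eb_in ea_in.
  have : ew \in lset mul one ec ed.
    apply: (H3 _ _ _ Hba Hab). apply/eqP. by vm_compute.
  by rewrite (negbTE ew_notin).
Qed.

Lemma gen_all : generates mul one [set ea; eb; ec; ed].
Proof.
  move=> S HS Hsub.
  have Ha : ea \in S by apply: (subsetP Hsub); rewrite !inE eqxx ?orbT.
  have Hb : eb \in S by apply: (subsetP Hsub); rewrite !inE eqxx ?orbT.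
  have Hc : ec \in S by apply: (subsetP Hsub); rewrite !inE eqxx ?orbT.
  have Hd : ed \in S by apply: (subsetP Hsub); rewrite !inE eqxx ?orbT.
  have HS1 : one \in S by case: HS.

  have L19 : forall x, sat [:: (2%nat, 81); (1%nat, 81); (0%nat, 81); (5%nat, 9); (4%nat, 9); (3%nat, 27); (2%nat, 27); (1%nat, 27); (0%nat, 27); (5%nat, 3); (4%nat, 3); (3%nat, 9); (2%nat, 9); (1%nat, 9); (0%nat, 9); (3%nat, 3); (2%nat, 3); (1%nat, 3); (0%nat, 3)] (toV x) -> x \in S.
    move=> x Hx. have H5 : sat dep5 (toV x) := sat_covers (ltac:(by vm_compute) : covers [:: (2%nat, 81); (1%nat, 81); (0%nat, 81); (5%nat, 9); (4%nat, 9); (3%nat, 27); (2%nat, 27); (1%nat, 27); (0%nat, 27); (5%nat, 3); (4%nat, 3); (3%nat, 9); (2%nat, 9); (1%nat, 9); (0%nat, 9); (3%nat, 3); (2%nat, 3); (1%nat, 3); (0%nat, 3)] dep5) Hx.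
    have -> : x = one by rewrite -(ofV_toV x) /one; apply: ofV_eq; exact: dep5_congK.
    exact: HS1.
  have M1 := @inS_mul S HS (ofV (V8 1 0 0 0 0 0 0 0)) (ofV (V8 1 0 0 0 0 0 0 0)) (ofV (V8 8 0 3 24 1 0 0 0)) Ha Ha ltac:(by vm_compute).
  have M2 := @inS_mul S HS (ofV (V8 1 0 0 0 0 0 0 0)) (ofV (V8 8 0 3 24 1 0 0 0)) (ofV (V8 48 0 27 0 0 0 0 0)) Ha M1 ltac:(by vm_compute).
  have M3 := @inS_mul S HS (ofV (V8 0 1 0 0 0 0 0 0)) (ofV (V8 0 1 0 0 0 0 0 0)) (ofV (V8 0 80 75 6 7 0 0 0)) Hb Hb ltac:(by vm_compute).
  have M4 := @inS_mul S HS (ofV (V8 0 1 0 0 0 0 0 0)) (ofV (V8 0 80 75 6 7 0 0 0)) (ofV (V8 0 21 0 0 0 0 0 0)) Hb M3 ltac:(by vm_compute).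
  have M5 := @inS_mul S HS (ofV (V8 0 0 1 0 0 0 0 0)) (ofV (V8 0 0 1 0 0 0 0 0)) (ofV (V8 0 0 80 0 0 0 0 0)) Hc Hc ltac:(by vm_compute).
  have M6 := @inS_mul S HS (ofV (V8 0 0 1 0 0 0 0 0)) (ofV (V8 0 0 80 0 0 0 0 0)) (ofV (V8 0 0 3 0 0 0 0 0)) Hc M5 ltac:(by vm_compute).
  have M7 := @inS_mul S HS (ofV (V8 0 0 0 1 0 0 0 0)) (ofV (V8 0 0 0 1 0 0 0 0)) (ofV (V8 0 0 0 26 0 0 0 0)) Hd Hd ltac:(by vm_compute).
  have M8 := @inS_mul S HS (ofV (V8 0 0 0 1 0 0 0 0)) (ofV (V8 0 0 0 26 0 0 0 0)) (ofV (V8 0 0 0 3 0 0 0 0)) Hd M7 ltac:(by vm_compute).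
  have M9 := @inS_mul S HS (ofV (V8 0 0 0 1 0 0 0 0)) (ofV (V8 1 0 0 0 0 0 0 0)) (ofV (V8 1 0 0 4 0 0 0 0)) Hd Ha ltac:(by vm_compute).
  have M10 := @inS_mul S HS (ofV (V8 1 0 0 0 0 0 0 0)) (ofV (V8 0 0 0 1 0 0 0 0)) (ofV (V8 79 0 78 7 8 0 0 0)) Ha Hd ltac:(by vm_compute).
  have M11 := @inS_ldiv S HS (ofV (V8 1 0 0 4 0 0 0 0)) (ofV (V8 79 0 78 7 8 0 0 0)) (ofV (V8 60 0 60 21 2 0 0 0)) M9 M10 ltac:(by vm_compute).
  have M12 := @inS_ldiv S HS (ofV (V8 48 0 27 0 0 0 0 0)) (ofV (V8 60 0 60 21 2 0 0 0)) (ofV (V8 12 0 6 21 2 0 0 0)) M2 M11 ltac:(by vm_compute).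
  have M13 := @inS_ldiv S HS (ofV (V8 48 0 27 0 0 0 0 0)) (ofV (V8 12 0 6 21 2 0 0 0)) (ofV (V8 18 0 60 21 2 0 0 0)) M2 M12 ltac:(by vm_compute).
  have M14 := @inS_ldiv S HS (ofV (V8 0 0 3 0 0 0 0 0)) (ofV (V8 18 0 60 21 2 0 0 0)) (ofV (V8 18 0 3 21 2 0 0 0)) M6 M13 ltac:(by vm_compute).
  have M15 := @inS_ldiv S HS (ofV (V8 0 0 3 0 0 0 0 0)) (ofV (V8 18 0 3 21 2 0 0 0)) (ofV (V8 18 0 0 21 2 0 0 0)) M6 M14 ltac:(by vm_compute).
  have M16 := @inS_ldiv S HS (ofV (V8 0 0 0 3 0 0 0 0)) (ofV (V8 18 0 0 21 2 0 0 0)) (ofV (V8 18 0 0 18 2 0 0 0)) M8 M15 ltac:(by vm_compute).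
  have M17 := @inS_mul S HS (ofV (V8 0 1 0 0 0 0 0 0)) (ofV (V8 1 0 0 0 0 0 0 0)) (ofV (V8 1 4 0 3 0 8 0 0)) Hb Ha ltac:(by vm_compute).
  have M18 := @inS_mul S HS (ofV (V8 1 0 0 0 0 0 0 0)) (ofV (V8 0 1 0 0 0 0 0 0)) (ofV (V8 79 4 0 24 0 1 0 0)) Ha Hb ltac:(by vm_compute).
  have M19 := @inS_ldiv S HS (ofV (V8 1 4 0 3 0 8 0 0)) (ofV (V8 79 4 0 24 0 1 0 0)) (ofV (V8 6 9 54 3 0 8 0 0)) M17 M18 ltac:(by vm_compute).
  have M20 := @inS_ldiv S HS (ofV (V8 48 0 27 0 0 0 0 0)) (ofV (V8 6 9 54 3 0 8 0 0)) (ofV (V8 12 9 27 3 0 8 0 0)) M2 M19 ltac:(by vm_compute).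
  have M21 := @inS_ldiv S HS (ofV (V8 48 0 27 0 0 0 0 0)) (ofV (V8 12 9 27 3 0 8 0 0)) (ofV (V8 72 9 27 3 0 8 0 0)) M2 M20 ltac:(by vm_compute).
  have M22 := @inS_ldiv S HS (ofV (V8 0 0 0 3 0 0 0 0)) (ofV (V8 72 9 27 3 0 8 0 0)) (ofV (V8 18 9 54 0 0 8 0 0)) M8 M21 ltac:(by vm_compute).
  have M23 := @inS_mul S HS (ofV (V8 48 0 27 0 0 0 0 0)) (ofV (V8 48 0 27 0 0 0 0 0)) (ofV (V8 69 0 0 0 0 0 0 0)) M2 M2 ltac:(by vm_compute).
  have M24 := @inS_mul S HS (ofV (V8 48 0 27 0 0 0 0 0)) (ofV (V8 69 0 0 0 0 0 0 0)) (ofV (V8 63 0 0 0 0 0 0 0)) M2 M23 ltac:(by vm_compute).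
  have M25 := @inS_mul S HS (ofV (V8 0 21 0 0 0 0 0 0)) (ofV (V8 0 21 0 0 0 0 0 0)) (ofV (V8 0 15 27 0 0 0 0 0)) M4 M4 ltac:(by vm_compute).
  have M26 := @inS_mul S HS (ofV (V8 0 21 0 0 0 0 0 0)) (ofV (V8 0 15 27 0 0 0 0 0)) (ofV (V8 0 63 0 0 0 0 0 0)) M4 M25 ltac:(by vm_compute).
  have M27 := @inS_mul S HS (ofV (V8 0 0 3 0 0 0 0 0)) (ofV (V8 0 0 3 0 0 0 0 0)) (ofV (V8 0 0 60 0 0 0 0 0)) M6 M6 ltac:(by vm_compute).
  have M28 := @inS_mul S HS (ofV (V8 0 0 3 0 0 0 0 0)) (ofV (V8 0 0 60 0 0 0 0 0)) (ofV (V8 0 0 9 0 0 0 0 0)) M6 M27 ltac:(by vm_compute).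
  have M29 := @inS_mul S HS (ofV (V8 0 0 0 3 0 0 0 0)) (ofV (V8 0 0 0 3 0 0 0 0)) (ofV (V8 0 0 0 6 0 0 0 0)) M8 M8 ltac:(by vm_compute).
  have M30 := @inS_mul S HS (ofV (V8 0 0 0 3 0 0 0 0)) (ofV (V8 0 0 0 6 0 0 0 0)) (ofV (V8 0 0 0 9 0 0 0 0)) M8 M29 ltac:(by vm_compute).
  have M31 := @inS_mul S HS (ofV (V8 18 0 0 18 2 0 0 0)) (ofV (V8 18 0 0 18 2 0 0 0)) (ofV (V8 36 0 0 9 4 0 0 0)) M16 M16 ltac:(by vm_compute).
  have M32 := @inS_mul S HS (ofV (V8 18 0 0 18 2 0 0 0)) (ofV (V8 36 0 0 9 4 0 0 0)) (ofV (V8 54 0 0 0 6 0 0 0)) M16 M31 ltac:(by vm_compute).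
  have M33 := @inS_mul S HS (ofV (V8 18 9 54 0 0 8 0 0)) (ofV (V8 18 9 54 0 0 8 0 0)) (ofV (V8 36 18 27 0 0 7 0 0)) M22 M22 ltac:(by vm_compute).
  have M34 := @inS_mul S HS (ofV (V8 18 9 54 0 0 8 0 0)) (ofV (V8 36 18 27 0 0 7 0 0)) (ofV (V8 54 27 0 0 0 6 0 0)) M22 M33 ltac:(by vm_compute).
  have M35 := @inS_mul S HS (ofV (V8 63 0 0 0 0 0 0 0)) (ofV (V8 63 0 0 0 0 0 0 0)) (ofV (V8 45 0 0 0 0 0 0 0)) M24 M24 ltac:(by vm_compute).
  have M36 := @inS_mul S HS (ofV (V8 63 0 0 0 0 0 0 0)) (ofV (V8 45 0 0 0 0 0 0 0)) (ofV (V8 27 0 0 0 0 0 0 0)) M24 M35 ltac:(by vm_compute).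
  have M37 := @inS_mul S HS (ofV (V8 0 63 0 0 0 0 0 0)) (ofV (V8 0 63 0 0 0 0 0 0)) (ofV (V8 0 45 0 0 0 0 0 0)) M26 M26 ltac:(by vm_compute).
  have M38 := @inS_mul S HS (ofV (V8 0 63 0 0 0 0 0 0)) (ofV (V8 0 45 0 0 0 0 0 0)) (ofV (V8 0 27 0 0 0 0 0 0)) M26 M37 ltac:(by vm_compute).
  have M39 := @inS_mul S HS (ofV (V8 0 0 9 0 0 0 0 0)) (ofV (V8 0 0 9 0 0 0 0 0)) (ofV (V8 0 0 18 0 0 0 0 0)) M28 M28 ltac:(by vm_compute).
  have M40 := @inS_mul S HS (ofV (V8 0 0 9 0 0 0 0 0)) (ofV (V8 0 0 18 0 0 0 0 0)) (ofV (V8 0 0 27 0 0 0 0 0)) M28 M39 ltac:(by vm_compute).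
  have Q0 := @inS_mul S HS (ofV (V8 1 0 0 0 0 0 0 0)) (ofV (V8 1 0 0 0 0 0 0 0)) (ofV (V8 8 0 3 24 1 0 0 0)) Ha Ha ltac:(by vm_compute).
  have Q1 := @inS_mul S HS (ofV (V8 0 1 0 0 0 0 0 0)) (ofV (V8 0 1 0 0 0 0 0 0)) (ofV (V8 0 80 75 6 7 0 0 0)) Hb Hb ltac:(by vm_compute).
  have Q2 := @inS_mul S HS (ofV (V8 0 0 1 0 0 0 0 0)) (ofV (V8 0 0 1 0 0 0 0 0)) (ofV (V8 0 0 80 0 0 0 0 0)) Hc Hc ltac:(by vm_compute).
  have Q3 := @inS_mul S HS (ofV (V8 0 0 0 1 0 0 0 0)) (ofV (V8 0 0 0 1 0 0 0 0)) (ofV (V8 0 0 0 26 0 0 0 0)) Hd Hd ltac:(by vm_compute).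
  have Q4 := @inS_mul S HS (ofV (V8 48 0 27 0 0 0 0 0)) (ofV (V8 48 0 27 0 0 0 0 0)) (ofV (V8 69 0 0 0 0 0 0 0)) M2 M2 ltac:(by vm_compute).
  have Q5 := @inS_mul S HS (ofV (V8 0 21 0 0 0 0 0 0)) (ofV (V8 0 21 0 0 0 0 0 0)) (ofV (V8 0 15 27 0 0 0 0 0)) M4 M4 ltac:(by vm_compute).
  have Q6 := @inS_mul S HS (ofV (V8 0 0 3 0 0 0 0 0)) (ofV (V8 0 0 3 0 0 0 0 0)) (ofV (V8 0 0 60 0 0 0 0 0)) M6 M6 ltac:(by vm_compute).
  have Q7 := @inS_mul S HS (ofV (V8 0 0 0 3 0 0 0 0)) (ofV (V8 0 0 0 3 0 0 0 0)) (ofV (V8 0 0 0 6 0 0 0 0)) M8 M8 ltac:(by vm_compute).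
  have Q8 := @inS_mul S HS (ofV (V8 18 0 0 18 2 0 0 0)) (ofV (V8 18 0 0 18 2 0 0 0)) (ofV (V8 36 0 0 9 4 0 0 0)) M16 M16 ltac:(by vm_compute).
  have Q9 := @inS_mul S HS (ofV (V8 18 9 54 0 0 8 0 0)) (ofV (V8 18 9 54 0 0 8 0 0)) (ofV (V8 36 18 27 0 0 7 0 0)) M22 M22 ltac:(by vm_compute).
  have Q10 := @inS_mul S HS (ofV (V8 63 0 0 0 0 0 0 0)) (ofV (V8 63 0 0 0 0 0 0 0)) (ofV (V8 45 0 0 0 0 0 0 0)) M24 M24 ltac:(by vm_compute).
  have Q11 := @inS_mul S HS (ofV (V8 0 63 0 0 0 0 0 0)) (ofV (V8 0 63 0 0 0 0 0 0)) (ofV (V8 0 45 0 0 0 0 0 0)) M26 M26 ltac:(by vm_compute).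
  have Q12 := @inS_mul S HS (ofV (V8 0 0 9 0 0 0 0 0)) (ofV (V8 0 0 9 0 0 0 0 0)) (ofV (V8 0 0 18 0 0 0 0 0)) M28 M28 ltac:(by vm_compute).
  have Q13 := @inS_mul S HS (ofV (V8 0 0 0 9 0 0 0 0)) (ofV (V8 0 0 0 9 0 0 0 0)) (ofV (V8 0 0 0 18 0 0 0 0)) M30 M30 ltac:(by vm_compute).
  have Q14 := @inS_mul S HS (ofV (V8 54 0 0 0 6 0 0 0)) (ofV (V8 54 0 0 0 6 0 0 0)) (ofV (V8 27 0 0 0 3 0 0 0)) M32 M32 ltac:(by vm_compute).
  have Q15 := @inS_mul S HS (ofV (V8 54 27 0 0 0 6 0 0)) (ofV (V8 54 27 0 0 0 6 0 0)) (ofV (V8 27 54 0 0 0 3 0 0)) M34 M34 ltac:(by vm_compute).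
  have Q16 := @inS_mul S HS (ofV (V8 27 0 0 0 0 0 0 0)) (ofV (V8 27 0 0 0 0 0 0 0)) (ofV (V8 54 0 0 0 0 0 0 0)) M36 M36 ltac:(by vm_compute).
  have Q17 := @inS_mul S HS (ofV (V8 0 27 0 0 0 0 0 0)) (ofV (V8 0 27 0 0 0 0 0 0)) (ofV (V8 0 54 0 0 0 0 0 0)) M38 M38 ltac:(by vm_compute).
  have Q18 := @inS_mul S HS (ofV (V8 0 0 27 0 0 0 0 0)) (ofV (V8 0 0 27 0 0 0 0 0)) (ofV (V8 0 0 54 0 0 0 0 0)) M40 M40 ltac:(by vm_compute).
  have L18 := @step S HS [:: (1%nat, 81); (0%nat, 81); (5%nat, 9); (4%nat, 9); (3%nat, 27); (2%nat, 27); (1%nat, 27); (0%nat, 27); (5%nat, 3); (4%nat, 3); (3%nat, 9); (2%nat, 9); (1%nat, 9); (0%nat, 9); (3%nat, 3); (2%nat, 3); (1%nat, 3); (0%nat, 3)] 2%nat 27 dep4 dep5 (ofV (V8 0 0 0 0 0 0 0 0)) (ofV (V8 0 0 27 0 0 0 0 0)) (ofV (V8 0 0 54 0 0 0 0 0)) HS1 M40 Q18 (@amR4) ltac:(by vm_compute) L19.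
  have L17 := @step S HS [:: (0%nat, 81); (5%nat, 9); (4%nat, 9); (3%nat, 27); (2%nat, 27); (1%nat, 27); (0%nat, 27); (5%nat, 3); (4%nat, 3); (3%nat, 9); (2%nat, 9); (1%nat, 9); (0%nat, 9); (3%nat, 3); (2%nat, 3); (1%nat, 3); (0%nat, 3)] 1%nat 27 dep4 dep5 (ofV (V8 0 0 0 0 0 0 0 0)) (ofV (V8 0 27 0 0 0 0 0 0)) (ofV (V8 0 54 0 0 0 0 0 0)) HS1 M38 Q17 (@amR4) ltac:(by vm_compute) L18.
  have L16 := @step S HS [:: (5%nat, 9); (4%nat, 9); (3%nat, 27); (2%nat, 27); (1%nat, 27); (0%nat, 27); (5%nat, 3); (4%nat, 3); (3%nat, 9); (2%nat, 9); (1%nat, 9); (0%nat, 9); (3%nat, 3); (2%nat, 3); (1%nat, 3); (0%nat, 3)] 0%nat 27 dep4 dep5 (ofV (V8 0 0 0 0 0 0 0 0)) (ofV (V8 27 0 0 0 0 0 0 0)) (ofV (V8 54 0 0 0 0 0 0 0)) HS1 M36 Q16 (@amR4) ltac:(by vm_compute) L17.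
  have L15 := @step S HS [:: (4%nat, 9); (3%nat, 27); (2%nat, 27); (1%nat, 27); (0%nat, 27); (5%nat, 3); (4%nat, 3); (3%nat, 9); (2%nat, 9); (1%nat, 9); (0%nat, 9); (3%nat, 3); (2%nat, 3); (1%nat, 3); (0%nat, 3)] 5%nat 3 dep3 dep4 (ofV (V8 0 0 0 0 0 0 0 0)) (ofV (V8 27 54 0 0 0 3 0 0)) (ofV (V8 54 27 0 0 0 6 0 0)) HS1 Q15 M34 (@amR3) ltac:(by vm_compute) L16.
  have L14 := @step S HS [:: (3%nat, 27); (2%nat, 27); (1%nat, 27); (0%nat, 27); (5%nat, 3); (4%nat, 3); (3%nat, 9); (2%nat, 9); (1%nat, 9); (0%nat, 9); (3%nat, 3); (2%nat, 3); (1%nat, 3); (0%nat, 3)] 4%nat 3 dep3 dep4 (ofV (V8 0 0 0 0 0 0 0 0)) (ofV (V8 27 0 0 0 3 0 0 0)) (ofV (V8 54 0 0 0 6 0 0 0)) HS1 Q14 M32 (@amR3) ltac:(by vm_compute) L15.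
  have L13 := @step S HS [:: (2%nat, 27); (1%nat, 27); (0%nat, 27); (5%nat, 3); (4%nat, 3); (3%nat, 9); (2%nat, 9); (1%nat, 9); (0%nat, 9); (3%nat, 3); (2%nat, 3); (1%nat, 3); (0%nat, 3)] 3%nat 9 dep3 dep4 (ofV (V8 0 0 0 0 0 0 0 0)) (ofV (V8 0 0 0 9 0 0 0 0)) (ofV (V8 0 0 0 18 0 0 0 0)) HS1 M30 Q13 (@amR3) ltac:(by vm_compute) L14.
  have L12 := @step S HS [:: (1%nat, 27); (0%nat, 27); (5%nat, 3); (4%nat, 3); (3%nat, 9); (2%nat, 9); (1%nat, 9); (0%nat, 9); (3%nat, 3); (2%nat, 3); (1%nat, 3); (0%nat, 3)] 2%nat 9 dep3 dep4 (ofV (V8 0 0 0 0 0 0 0 0)) (ofV (V8 0 0 9 0 0 0 0 0)) (ofV (V8 0 0 18 0 0 0 0 0)) HS1 M28 Q12 (@amR3) ltac:(by vm_compute) L13.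
  have L11 := @step S HS [:: (0%nat, 27); (5%nat, 3); (4%nat, 3); (3%nat, 9); (2%nat, 9); (1%nat, 9); (0%nat, 9); (3%nat, 3); (2%nat, 3); (1%nat, 3); (0%nat, 3)] 1%nat 9 dep3 dep4 (ofV (V8 0 0 0 0 0 0 0 0)) (ofV (V8 0 63 0 0 0 0 0 0)) (ofV (V8 0 45 0 0 0 0 0 0)) HS1 M26 Q11 (@amR3) ltac:(by vm_compute) L12.
  have L10 := @step S HS [:: (5%nat, 3); (4%nat, 3); (3%nat, 9); (2%nat, 9); (1%nat, 9); (0%nat, 9); (3%nat, 3); (2%nat, 3); (1%nat, 3); (0%nat, 3)] 0%nat 9 dep3 dep4 (ofV (V8 0 0 0 0 0 0 0 0)) (ofV (V8 63 0 0 0 0 0 0 0)) (ofV (V8 45 0 0 0 0 0 0 0)) HS1 M24 Q10 (@amR3) ltac:(by vm_compute) L11.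
  have L9 := @step S HS [:: (4%nat, 3); (3%nat, 9); (2%nat, 9); (1%nat, 9); (0%nat, 9); (3%nat, 3); (2%nat, 3); (1%nat, 3); (0%nat, 3)] 5%nat 1 dep2 dep3 (ofV (V8 0 0 0 0 0 0 0 0)) (ofV (V8 36 18 27 0 0 7 0 0)) (ofV (V8 18 9 54 0 0 8 0 0)) HS1 Q9 M22 (@amR2) ltac:(by vm_compute) L10.
  have L8 := @step S HS [:: (3%nat, 9); (2%nat, 9); (1%nat, 9); (0%nat, 9); (3%nat, 3); (2%nat, 3); (1%nat, 3); (0%nat, 3)] 4%nat 1 dep2 dep3 (ofV (V8 0 0 0 0 0 0 0 0)) (ofV (V8 36 0 0 9 4 0 0 0)) (ofV (V8 18 0 0 18 2 0 0 0)) HS1 Q8 M16 (@amR2) ltac:(by vm_compute) L9.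
  have L7 := @step S HS [:: (2%nat, 9); (1%nat, 9); (0%nat, 9); (3%nat, 3); (2%nat, 3); (1%nat, 3); (0%nat, 3)] 3%nat 3 dep2 dep3 (ofV (V8 0 0 0 0 0 0 0 0)) (ofV (V8 0 0 0 3 0 0 0 0)) (ofV (V8 0 0 0 6 0 0 0 0)) HS1 M8 Q7 (@amR2) ltac:(by vm_compute) L8.
  have L6 := @step S HS [:: (1%nat, 9); (0%nat, 9); (3%nat, 3); (2%nat, 3); (1%nat, 3); (0%nat, 3)] 2%nat 3 dep2 dep3 (ofV (V8 0 0 0 0 0 0 0 0)) (ofV (V8 0 0 3 0 0 0 0 0)) (ofV (V8 0 0 60 0 0 0 0 0)) HS1 M6 Q6 (@amR2) ltac:(by vm_compute) L7.
  have L5 := @step S HS [:: (0%nat, 9); (3%nat, 3); (2%nat, 3); (1%nat, 3); (0%nat, 3)] 1%nat 3 dep2 dep3 (ofV (V8 0 0 0 0 0 0 0 0)) (ofV (V8 0 21 0 0 0 0 0 0)) (ofV (V8 0 15 27 0 0 0 0 0)) HS1 M4 Q5 (@amR2) ltac:(by vm_compute) L6.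
  have L4 := @step S HS [:: (3%nat, 3); (2%nat, 3); (1%nat, 3); (0%nat, 3)] 0%nat 3 dep2 dep3 (ofV (V8 0 0 0 0 0 0 0 0)) (ofV (V8 48 0 27 0 0 0 0 0)) (ofV (V8 69 0 0 0 0 0 0 0)) HS1 M2 Q4 (@amR2) ltac:(by vm_compute) L5.
  have L3 := @step S HS [:: (2%nat, 3); (1%nat, 3); (0%nat, 3)] 3%nat 1 dep1 dep2 (ofV (V8 0 0 0 0 0 0 0 0)) (ofV (V8 0 0 0 1 0 0 0 0)) (ofV (V8 0 0 0 26 0 0 0 0)) HS1 Hd Q3 (@amR1) ltac:(by vm_compute) L4.
  have L2 := @step S HS [:: (1%nat, 3); (0%nat, 3)] 2%nat 1 dep1 dep2 (ofV (V8 0 0 0 0 0 0 0 0)) (ofV (V8 0 0 1 0 0 0 0 0)) (ofV (V8 0 0 80 0 0 0 0 0)) HS1 Hc Q2 (@amR1) ltac:(by vm_compute) L3.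
  have L1 := @step S HS [:: (0%nat, 3)] 1%nat 1 dep1 dep2 (ofV (V8 0 0 0 0 0 0 0 0)) (ofV (V8 0 1 0 0 0 0 0 0)) (ofV (V8 0 80 75 6 7 0 0 0)) HS1 Hb Q1 (@amR1) ltac:(by vm_compute) L2.
  have L0 := @step S HS [:: ] 0%nat 1 dep1 dep2 (ofV (V8 0 0 0 0 0 0 0 0)) (ofV (V8 1 0 0 0 0 0 0 0)) (ofV (V8 8 0 3 24 1 0 0 0)) HS1 Ha Q0 (@amR1) ltac:(by vm_compute) L1.

  apply/setP => x; rewrite inE; exact: L0 x I.
Qed.
End MLoop.

Theorem mainTheorem3 :
  exists (T : finType) (mul : T -> T -> T) (one : T),
    is_moufang_loop mul one /\ #|T| = 3 ^ 19 /\
    exists a b c d : T,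
      generates mul one [set a; b; c; d] /\
      ~ is_subloop mul one (lset mul one c d) /\
      a \in lset mul one c d /\ b \in lset mul one c d /\
      lcomm mul one a b \notin lset mul one c d.
Proof.
  exists MLoop.T, MLoop.mul, MLoop.one.
  split; first exact: MLoop.T_moufang.
  split.
    have H : forall x : nat, x^4 * x^4 * x^4 * x^3 * x^2 * x^2 = x^19 by move=> x; rewrite -!expnD.
    rewrite /MLoop.T !card_prod !card_ord. exact: (H 3).
  exists MLoop.ea, MLoop.eb, MLoop.ec, MLoop.ed.
  split; first exact: MLoop.gen_all.
  split; first exact: MLoop.not_sub.
  split; first exact: MLoop.ea_in.
  split; first exact: MLoop.eb_in.
  by rewrite MLoop.ew_comm; exact: MLoop.ew_notin.
Qed.
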